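(* Let $G:[0,\infty)\to\mathbb{C}$ be continuous, let $H_S^{(0)},H_S^{(2)}$ be Hermitian $N\times N$ matrices, $\lambda>0$, and let $W_\lambda(t)=V_\lambda(\lambda^{-2}t)$, where $V_\lambda$ is the $N\times N$ matrix-valued solution of $$\frac{d}{dt}V_\lambda(t)=-\lambda^2\int_0^t ds\,G(t-s)\,e^{i(H_S^{(0)}+\lambda^2H_S^{(2)})(t-s)}V_\lambda(s),\qquad V_\lambda(0)=I.$$ Define the Laplace transforms $\tilde W_\lambda(p)=\int_0^\infty e^{-pt}W_\lambda(t)\,dt$ and $\tilde G(p)=\int_0^\infty e^{-pt}G(t)\,dt$. Then (for $p$ at which the Laplace integrals involved converge) $$\tilde W_\lambda(p)=\Big(p+\tilde G\big(-iH_S^{(0)}+\lambda^2(p-iH_S^{(2)})\big)\Big)^{-1}.$$ Here the matrix function is defined through the Hermitian matrix $H_S=H_S^{(0)}+\lambda^2H_S^{(2)}$: if $H_S=U\,\mathrm{diag}\{E_\alpha\}U^\dagger$ with $U$ unitary, then $$\Big(p+\tilde G(-iH_S+\lambda^2p)\Big)^{-1}=U\,\mathrm{diag}\Big\{\frac{1}{p+\tilde G(-iE_\alpha+\lambda^2p)}\Big\}U^\dagger.$$ *)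

(* Defs.v *)
From Stdlib Require Import Reals.
From Coquelicot Require Export Coquelicot.
Open Scope R_scope.

Definition cexp (z : C) : C :=
  (exp (fst z) * cos (snd z), exp (fst z) * sin (snd z)).

(* N x N complex matrices are represented as functions nat -> nat -> C;
   only the entries with indices < N are meaningful. *)
Definition Mat := nat -> nat -> C.

Fixpoint csum (n : nat) (f : nat -> C) : C :=
  match n with
  | O => RtoC 0
  | S n' => Cplus (csum n' f) (f n')
  end.

Definition mmul (N : nat) (A B : Mat) : Mat :=
  fun i j => csum N (fun k => Cmult (A i k) (B k j)).

Definition madj (A : Mat) : Mat := fun i j => Cconj (A j i).

Definition mid : Mat := fun i j => if Nat.eqb i j then RtoC 1 else RtoC 0.

Definition mdiag (d : nat -> C) : Mat :=
  fun i j => if Nat.eqb i j then d i else RtoC 0.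

Definition madd (A B : Mat) : Mat := fun i j => Cplus (A i j) (B i j).
Definition mscal (c : C) (A : Mat) : Mat := fun i j => Cmult c (A i j).

Definition meq (N : nat) (A B : Mat) : Prop :=
  forall i j, (i < N)%nat -> (j < N)%nat -> A i j = B i j.

Definition hermitian (N : nat) (A : Mat) : Prop := meq N A (madj A).

Definition unitary (N : nat) (U : Mat) : Prop :=
  meq N (mmul N U (madj U)) mid /\ meq N (mmul N (madj U) U) mid.

(* Functional calculus for a Hermitian matrix H = U diag(E) U^dagger:
   f(H) := U diag(f(E_alpha)) U^dagger. *)
Definition mfun (N : nat) (U : Mat) (E : nat -> R) (f : R -> C) : Mat :=
  mmul N (mmul N U (mdiag (fun a => f (E a)))) (madj U).

Definition laplace_integrand (f : R -> C) (s : C) : R -> C :=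
  fun t => Cmult (cexp (Copp (Cmult s (RtoC t)))) (f t).

Definition laplace (f : R -> C) (s : C) : C :=
  @RInt_gen C_R_CompleteNormedModule (laplace_integrand f s)
    (at_point 0) (Rbar_locally p_infty).

Definition laplace_abs_conv (f : R -> C) (s : C) : Prop :=
  ex_RInt_gen (fun t => Cmod (laplace_integrand f s t))
    (at_point 0) (Rbar_locally p_infty).

Definition continuous_on_nonneg (f : R -> C) : Prop :=
  forall t, 0 <= t ->
    filterlim f (within (fun s => 0 <= s) (locally t)) (@locally C_UniformSpace (f t)).

Definition expiH (N : nat) (U : Mat) (E : nat -> R) (tau : R) : Mat :=
  mfun N U E (fun e => cexp (0, e * tau)).

Definition is_solution (N : nat) (G : R -> C) (U : Mat) (E : nat -> R)
    (lam : R) (V : R -> Mat) : Prop :=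
  meq N (V 0) mid /\
  (forall i j, (i < N)%nat -> (j < N)%nat -> continuous_on_nonneg (fun t => V t i j)) /\
  (forall t, 0 < t -> forall i j, (i < N)%nat -> (j < N)%nat ->
     exists D : C,
       @is_RInt C_R_NormedModule
         (fun s => Cmult (G (t - s)) (mmul N (expiH N U E (t - s)) (V s) i j)) 0 t D /\
       @is_derive R_AbsRing C_R_NormedModule (fun tau => V tau i j) t
         (Cmult (RtoC (- lam ^ 2)) D)).

(* Main.v *)
Require Import Defs.
From Stdlib Require Import Reals Lra Lia FunctionalExtensionality.
From Coquelicot Require Import Coquelicot.
Open Scope R_scope.

Lemma C_plusE (a b : C) : @plus C_R_NormedModule a b = Cplus a b.
Proof. reflexivity. Qed.
Lemma C_oppE (a : C) : @opp C_R_NormedModule a = Copp a.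
Proof. reflexivity. Qed.
Lemma C_minusE (a b : C) : @minus C_R_NormedModule a b = Cminus a b.
Proof. reflexivity. Qed.
Lemma C_scalE (r : R) (a : C) : @scal R_Ring C_R_NormedModule r a = Cmult (RtoC r) a.
Proof. destruct a; unfold Cmult, RtoC; simpl. unfold scal; simpl. unfold prod_scal; simpl. unfold scal; simpl. unfold mult; simpl. f_equal; ring. Qed.
Lemma C_normE (a : C) : @norm R_AbsRing C_R_NormedModule a = Cmod a.
Proof. destruct a. unfold Cmod; simpl. unfold norm; simpl. unfold prod_norm; simpl. unfold norm; simpl. unfold abs; simpl. assert (H: forall x, Rabs x * (Rabs x * 1) = x * (x*1)) by (intro x; rewrite !Rmult_1_r, <- Rabs_mult; apply Rabs_right; nra). rewrite !H. reflexivity. Qed.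

Lemma C_cont_pair {U : UniformSpace} (f : U -> C) x :
  continuous (fun t => fst (f t)) x -> continuous (fun t => snd (f t)) x ->
  continuous f x.
Proof.
  intros H1 H2.
  assert (E : f = fun t => (fst (f t), snd (f t))).
  { apply functional_extensionality; intro t; destruct (f t); reflexivity. }
  unfold continuous in *. apply filterlim_locally. intros eps.
  apply filterlim_locally with (eps := eps) in H1.
  apply filterlim_locally with (eps := eps) in H2.
  generalize (filter_and _ _ H1 H2). apply filter_imp.
  intros t [h1 h2]. split; assumption.
Qed.

Lemma C_cont_fst {U : UniformSpace} (f : U -> C) x :
  continuous f x -> continuous (fun t => fst (f t)) x.
Proof.
  intros H. apply (continuous_comp f fst). exact H.
  destruct (f x). apply continuous_fst.
Qed.
Lemma C_cont_snd {U : UniformSpace} (f : U -> C) x :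
  continuous f x -> continuous (fun t => snd (f t)) x.
Proof.
  intros H. apply (continuous_comp f snd). exact H.
  destruct (f x). apply continuous_snd.
Qed.

Lemma C_derive_pair (f : R -> C) x (l : C) :
  is_derive (fun t => fst (f t)) x (fst l) -> is_derive (fun t => snd (f t)) x (snd l) ->
  @is_derive R_AbsRing C_R_NormedModule f x l.
Proof.
  intros H1 H2.
  assert (E : f = fun t => (fst (f t), snd (f t))).
  { apply functional_extensionality; intro t; destruct (f t); reflexivity. }
  rewrite E. destruct l as [l1 l2]. simpl in *.
  unfold is_derive in *.
  apply (filterdiff_comp'_2 (fun t => fst (f t)) (fun t => snd (f t)) (fun u v => (u,v)) x
     (fun y => scal y l1) (fun y => scal y l2) (fun u v => (u, v)) H1 H2).
  apply filterdiff_linear.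
  split.
  - intros [] []; reflexivity.
  - intros k []; reflexivity.
  - exists 1. split. lra. intros [a b]. rewrite Rmult_1_l. apply Rle_refl.
Qed.

Lemma C_derive_fst (f : R -> C) x (l : C) :
  @is_derive R_AbsRing C_R_NormedModule f x l -> is_derive (fun t => fst (f t)) x (fst l).
Proof.
  intros H. unfold is_derive in *.
  apply (filterdiff_comp f fst (fun y => scal y l) fst H).
  apply filterdiff_linear. apply is_linear_fst.
Qed.
Lemma C_derive_snd (f : R -> C) x (l : C) :
  @is_derive R_AbsRing C_R_NormedModule f x l -> is_derive (fun t => snd (f t)) x (snd l).
Proof.
  intros H. unfold is_derive in *.
  apply (filterdiff_comp f snd (fun y => scal y l) snd H).
  apply filterdiff_linear. apply is_linear_snd.
Qed.

Lemma is_derive_ext2 {K : AbsRing} {V : NormedModule K} (f g : K -> V) x l l' :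
  (forall t, f t = g t) -> l = l' -> is_derive f x l -> is_derive g x l'.
Proof. intros H1 H2 H3; subst l'; eapply is_derive_ext; eassumption. Qed.

Lemma C_derive_mult (f g : R -> C) x df dg :
  @is_derive R_AbsRing C_R_NormedModule f x df ->
  @is_derive R_AbsRing C_R_NormedModule g x dg ->
  @is_derive R_AbsRing C_R_NormedModule (fun t => Cmult (f t) (g t)) x
     (Cplus (Cmult df (g x)) (Cmult (f x) dg)).
Proof.
  intros Hf Hg.
  pose proof (C_derive_fst _ _ _ Hf) as F1. pose proof (C_derive_snd _ _ _ Hf) as F2.
  pose proof (C_derive_fst _ _ _ Hg) as G1. pose proof (C_derive_snd _ _ _ Hg) as G2.
  apply C_derive_pair.
  - pose proof (is_derive_minus _ _ _ _ _ (Derive.is_derive_mult _ _ _ _ _ F1 G1) (Derive.is_derive_mult _ _ _ _ _ F2 G2)) as K.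
    eapply is_derive_ext2; [| |exact K]. intro t; simpl. destruct (f t), (g t); reflexivity.
    destruct df, dg; simpl; destruct (f x), (g x); simpl. unfold minus, plus, opp; simpl. ring.
  - pose proof (is_derive_plus _ _ _ _ _ (Derive.is_derive_mult _ _ _ _ _ F1 G2) (Derive.is_derive_mult _ _ _ _ _ F2 G1)) as K.
    eapply is_derive_ext2; [| |exact K]. intro t; simpl. destruct (f t), (g t); reflexivity.
    destruct df, dg; simpl; destruct (f x), (g x); simpl. unfold plus; simpl. ring.
Qed.

Lemma C_cont_mult {U : UniformSpace} (f g : U -> C) x :
  continuous f x -> continuous g x -> continuous (fun t => Cmult (f t) (g t)) x.
Proof.
  intros Hf Hg.
  pose proof (C_cont_fst _ _ Hf) as F1. pose proof (C_cont_snd _ _ Hf) as F2.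
  pose proof (C_cont_fst _ _ Hg) as G1. pose proof (C_cont_snd _ _ Hg) as G2.
  apply C_cont_pair.
  - eapply continuous_ext; [|apply (continuous_minus _ _ _ (continuous_mult _ _ _ F1 G1) (continuous_mult _ _ _ F2 G2))].
    intro t. simpl. destruct (f t), (g t); reflexivity.
  - eapply continuous_ext; [|apply (continuous_plus _ _ _ (continuous_mult _ _ _ F1 G2) (continuous_mult _ _ _ F2 G1))].
    intro t. simpl. destruct (f t), (g t); reflexivity.
Qed.

Lemma C_RInt_pair (f : R -> C) a b (l : C) :
  is_RInt (fun t => fst (f t)) a b (fst l) -> is_RInt (fun t => snd (f t)) a b (snd l) ->
  @is_RInt C_R_NormedModule f a b l.
Proof.
  intros H1 H2. destruct l. apply (is_RInt_fct_extend_pair f a b r r0 H1 H2).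
Qed.
Lemma C_RInt_fst (f : R -> C) a b (l : C) :
  @is_RInt C_R_NormedModule f a b l -> is_RInt (fun t => fst (f t)) a b (fst l).
Proof. intros H. apply (is_RInt_fct_extend_fst f a b l H). Qed.
Lemma C_RInt_snd (f : R -> C) a b (l : C) :
  @is_RInt C_R_NormedModule f a b l -> is_RInt (fun t => snd (f t)) a b (snd l).
Proof. intros H. apply (is_RInt_fct_extend_snd f a b l H). Qed.

Lemma is_RInt_ext2 {V : NormedModule R_AbsRing} (f g : R -> V) a b l l' :
  (forall t, f t = g t) -> l = l' -> is_RInt f a b l -> is_RInt g a b l'.
Proof. intros H1 H2 H3; subst l'. eapply is_RInt_ext; [|eassumption]. intros; auto. Qed.

Lemma C_RInt_mult_l (k : C) (f : R -> C) a b (l : C) :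
  @is_RInt C_R_NormedModule f a b l -> @is_RInt C_R_NormedModule (fun t => Cmult k (f t)) a b (Cmult k l).
Proof.
  intros H. pose proof (C_RInt_fst _ _ _ _ H) as H1. pose proof (C_RInt_snd _ _ _ _ H) as H2.
  apply C_RInt_pair.
  - eapply is_RInt_ext2; [| | apply (is_RInt_minus _ _ _ _ _ _ (is_RInt_scal _ _ _ (fst k) _ H1) (is_RInt_scal _ _ _ (snd k) _ H2))].
    intro t; simpl; destruct k, (f t); reflexivity.
    destruct k, l; reflexivity.
  - eapply is_RInt_ext2; [| | apply (is_RInt_plus _ _ _ _ _ _ (is_RInt_scal _ _ _ (fst k) _ H2) (is_RInt_scal _ _ _ (snd k) _ H1))].
    intro t; simpl; destruct k, (f t); reflexivity.
    destruct k, l; reflexivity.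
Qed.

Definition lim_inf {V : NormedModule R_AbsRing} (F : R -> V) (l : V) : Prop :=
  forall eps : R, 0 < eps -> exists M, forall T, M <= T -> norm (minus (F T) l) < eps.

Lemma filterlim_lim_inf {V : NormedModule R_AbsRing} (F : R -> V) (l : V) :
  filterlim F (Rbar_locally p_infty) (locally l) -> lim_inf F l.
Proof.
  intros H eps Heps.
  assert (Hp : 0 < eps / norm_factor (V:=V)).
  { apply Rdiv_lt_0_compat; [lra | apply norm_factor_gt_0]. }
  destruct (proj1 (filterlim_locally F l) H (mkposreal _ Hp)) as [M HM].
  exists (M + 1). intros T HT.
  specialize (HM T ltac:(lra)).
  pose proof (norm_compat2 _ _ _ HM) as K. simpl in K.
  replace (norm_factor * (eps / norm_factor)) with eps in K.
  2:{ field. apply Rgt_not_eq, norm_factor_gt_0. }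
  exact K.
Qed.

Lemma lim_inf_filterlim {V : NormedModule R_AbsRing} (F : R -> V) (l : V) :
  lim_inf F l -> filterlim F (Rbar_locally p_infty) (locally l).
Proof.
  intros H. apply filterlim_locally. intros eps.
  destruct (H eps (cond_pos eps)) as [M HM].
  exists M. intros T HT. apply norm_compat1. apply HM; lra.
Qed.

Lemma lim_inf_RInt_gen {V : CompleteNormedModule R_AbsRing} (f : R -> V) (l : V) :
  is_RInt_gen f (at_point 0) (Rbar_locally p_infty) l ->
  lim_inf (fun T => RInt f 0 T) l.
Proof.
  intros H eps Heps.
  assert (Hp : 0 < eps / norm_factor (V:=V)).
  { apply Rdiv_lt_0_compat; [lra | apply norm_factor_gt_0]. }
  unfold is_RInt_gen, filterlimi, filter_le, filtermapi in H.
  specialize (H (ball l (mkposreal _ Hp))).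
  destruct H as [Q R HQ HR HQR].
  { apply locally_ball. }
  destruct HR as [M HM]. exists (M+1). intros T HT.
  destruct (HQR 0 T HQ (HM T ltac:(lra))) as [v [Hv Hb]].
  simpl in Hv. rewrite (is_RInt_unique _ _ _ _ Hv).
  pose proof (norm_compat2 _ _ (mkposreal _ Hp) Hb) as K. simpl in K.
  replace (norm_factor * (eps / norm_factor)) with eps in K.
  2:{ field. apply Rgt_not_eq, norm_factor_gt_0. }
  exact K.
Qed.

Lemma RInt_gen_lim_inf {V : CompleteNormedModule R_AbsRing} (f : R -> V) (l : V) :
  (forall T, 0 <= T -> ex_RInt f 0 T) ->
  lim_inf (fun T => RInt f 0 T) l ->
  is_RInt_gen f (at_point 0) (Rbar_locally p_infty) l.
Proof.
  intros Hex H.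
  unfold is_RInt_gen, filterlimi, filter_le, filtermapi.
  intros P [eps HP].
  destruct (H eps (cond_pos eps)) as [M HM].
  apply Filter_prod with (Q := fun x => x = 0) (R := fun y => Rmax M 0 < y).
  - reflexivity.
  - exists (Rmax M 0). auto.
  - intros x y Hx Hy. subst x. simpl. exists (RInt f 0 y). split.
    + apply RInt_correct. apply Hex. pose proof (Rmax_r M 0). lra.
    + apply HP. apply norm_compat1. apply HM.
      pose proof (Rmax_l M 0). lra.
Qed.

Lemma lim_inf_unique_RInt_gen {V : CompleteNormedModule R_AbsRing} (f : R -> V) (l : V) :
  (forall T, 0 <= T -> ex_RInt f 0 T) ->
  lim_inf (fun T => RInt f 0 T) l ->
  RInt_gen f (at_point 0) (Rbar_locally p_infty) = l.
Proof.
  intros Hex H. apply is_RInt_gen_unique. apply RInt_gen_lim_inf; auto.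
Qed.

Lemma lim_inf_dom {V : CompleteNormedModule R_AbsRing} (f : R -> V) (k : R -> R) (K : R) :
  (forall T, 0 <= T -> ex_RInt f 0 T) ->
  (forall T, 0 <= T -> ex_RInt k 0 T) ->
  (forall t, 0 <= t -> norm (f t) <= k t) ->
  lim_inf (fun T => RInt k 0 T) K ->
  exists l, lim_inf (fun T => RInt f 0 T) l.
Proof.
  intros Hf Hk Hb HK.
  assert (E : exists l, filterlim (fun T => RInt f 0 T) (Rbar_locally p_infty) (locally l)).
  { apply (filterlim_locally_cauchy (F := Rbar_locally p_infty)).
    intros eps.
    destruct (HK (eps/2) ltac:(destruct eps; simpl; lra)) as [M HM].
    exists (fun T => Rmax M 0 < T). split.
    - exists (Rmax M 0). auto.
    - intros u v Hu Hv.
      pose proof (Rmax_l M 0). pose proof (Rmax_r M 0).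
      apply (@norm_compat1 R_AbsRing V).
      assert (Hc : forall a b, 0 <= a -> a <= b -> norm (minus (RInt f 0 b) (RInt f 0 a)) <= RInt k 0 b - RInt k 0 a).
      { intros a b Ha Hab.
        assert (C1 := is_RInt_Chasles f a 0 b _ _ (is_RInt_swap _ _ _ _ (RInt_correct f 0 a (Hf a Ha))) (RInt_correct f 0 b (Hf b ltac:(lra)))).
        assert (C2 := is_RInt_Chasles k a 0 b _ _ (is_RInt_swap _ _ _ _ (RInt_correct k 0 a (Hk a Ha))) (RInt_correct k 0 b (Hk b ltac:(lra)))).
        rewrite plus_comm in C1.
        apply (norm_RInt_le f k a b _ _ Hab); [|exact C1| ].
        intros x Hx. apply Hb. lra.
        replace (RInt k 0 b - RInt k 0 a) with (plus (opp (RInt k 0 a)) (RInt k 0 b)). exact C2.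
        unfold plus, opp; simpl. ring. }
      assert (H1 := HM u ltac:(lra)). assert (H2 := HM v ltac:(lra)).
      change (norm (minus (RInt k 0 u) K)) with (Rabs (RInt k 0 u - K)) in H1.
      change (norm (minus (RInt k 0 v) K)) with (Rabs (RInt k 0 v - K)) in H2.
      apply Rabs_def2 in H1. apply Rabs_def2 in H2.
      destruct (Rle_lt_dec u v).
      + eapply Rle_lt_trans. apply Hc; lra. destruct eps; simpl in *; lra.
      + rewrite <- norm_opp, opp_minus.
        eapply Rle_lt_trans. apply Hc; lra. destruct eps; simpl in *; lra. }
  destruct E as [l Hl]. exists l. apply filterlim_lim_inf. exact Hl.
Qed.

Lemma cont_pt_of (f : R -> R) x : continuous f x -> continuity_pt f x.
Proof. intros H. apply continuity_pt_filterlim. exact H. Qed.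

Lemma locally_2d_all (P : R -> R -> Prop) x y : (forall u v, P u v) -> locally_2d P x y.
Proof. intros H. exists (mkposreal 1 Rlt_0_1). intros; apply H. Qed.

Lemma RL (p q : R -> R) (Hp : forall x, continuous p x) (Hq : forall x, continuous q x) (x : R) :
  is_derive (fun T => RInt (fun u => p u * RInt q 0 (T - u)) 0 T) x
            (RInt (fun u => p u * q (x - u)) 0 x).
Proof.
  set (Q := fun r => RInt q 0 r).
  assert (HQd : forall r, is_derive Q r (q r)).
  { intros r. apply (is_derive_RInt q Q 0 r).
    apply filter_forall. intros b. unfold Q. apply (RInt_correct (V:=R_CompleteNormedModule)). apply ex_RInt_continuous. intros; apply Hq.
    apply Hq. }
  assert (HQc : forall r, continuous Q r).
  { intros r. apply (ex_derive_continuous (K:=R_AbsRing) (V:=R_NormedModule)). eexists; apply HQd. }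
  set (f := fun x t => p t * Q (x - t)).
  assert (Hfd : forall x t, is_derive (fun u => f u t) x (p t * q (x - t))).
  { intros y t. unfold f.
    replace (p t * q (y - t)) with (p t * (1 * q (y - t))) by ring.
    apply is_derive_scal.
    apply (is_derive_comp Q (fun u => u - t) y (q (y - t)) 1).
    apply HQd.
    auto_derive; [exact I | ring]. }
  assert (HD : forall x t, Derive (fun u => f u t) x = p t * q (x - t)).
  { intros; apply is_derive_unique; apply Hfd. }
  assert (Hfc : forall y t, continuous (fun t => f y t) t).
  { intros y t. unfold f. apply (continuous_mult (K:=R_AbsRing)). apply Hp.
    apply (continuous_comp (fun t => y - t) Q). 
    apply (ex_derive_continuous (K:=R_AbsRing) (V:=R_NormedModule)). auto_derive; exact I. apply HQc. }
  assert (Hex : forall y a b, ex_RInt (fun t => f y t) a b).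
  { intros. apply (ex_RInt_continuous (V:=R_CompleteNormedModule)). intros; apply Hfc. }
  assert (H2d : forall u v, continuity_2d_pt (fun u v => Derive (fun z => f z v) u) u v).
  { intros u v. apply continuity_2d_pt_ext with (f := fun u v => p v * q (u - v)).
    intros; rewrite HD; reflexivity.
    apply continuity_2d_pt_mult.
    - apply (continuity_1d_2d_pt_comp p (fun _ v => v)). apply cont_pt_of, Hp. apply continuity_2d_pt_id2.
    - apply (continuity_1d_2d_pt_comp q (fun u v => u - v)). apply cont_pt_of, Hq.
      apply continuity_2d_pt_minus. apply continuity_2d_pt_id1. apply continuity_2d_pt_id2. }
  pose proof (is_derive_RInt_param_bound_comp f (fun _ => 0) (fun x => x) x 0 1) as K.
  assert (E1 : RInt (fun t => Derive (fun u => f u t) x) 0 x = RInt (fun u => p u * q (x - u)) 0 x).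
  { apply RInt_ext. intros; apply HD. }
  assert (E2 : f x x = 0).
  { unfold f, Q. replace (x - x) with 0 by ring. rewrite RInt_point. unfold zero; simpl. ring. }
  eapply is_derive_ext2; [intro; reflexivity | | apply K].
  - rewrite E1. rewrite E2. match goal with |- ?A = ?B => change (@eq R A B) end; ring.
  - apply filter_forall; intros; apply Hex.
  - exists (mkposreal 1 Rlt_0_1). apply filter_forall; intros; apply Hex.
  - exists (mkposreal 1 Rlt_0_1). apply filter_forall; intros; apply Hex.
  - auto_derive; [exact I | ring].
  - auto_derive; [exact I | ring].
  - exists (mkposreal 1 Rlt_0_1). apply filter_forall; intros. eexists; apply Hfd.
  - intros; apply H2d.
  - apply locally_2d_all; intros; apply H2d.
  - apply locally_2d_all; intros; apply H2d.
  - apply cont_pt_of, Hfc.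
  - apply cont_pt_of, Hfc.
Qed.

Lemma C_RInt_eq (f : R -> C) a b (l : C) :
  is_RInt (fun t => fst (f t)) a b (fst l) -> is_RInt (fun t => snd (f t)) a b (snd l) ->
  @RInt C_R_CompleteNormedModule f a b = l.
Proof. intros H1 H2. apply is_RInt_unique. apply C_RInt_pair; auto. Qed.

Lemma rint_real (f : R -> R) a b : (forall x, continuous f x) -> is_RInt f a b (RInt f a b).
Proof. intros H. apply (RInt_correct (V:=R_CompleteNormedModule)). apply (ex_RInt_continuous (V:=R_CompleteNormedModule)). intros; apply H. Qed.

Lemma CL (a b : R -> C) (Ha : forall x, continuous a x) (Hb : forall x, continuous b x) (x : R) :
  @is_derive R_AbsRing C_R_NormedModule
    (fun T => @RInt C_R_CompleteNormedModule (fun u => Cmult (a u) (@RInt C_R_CompleteNormedModule b 0 (T - u))) 0 T) x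
    (@RInt C_R_CompleteNormedModule (fun u => Cmult (a u) (b (x - u))) 0 x).
Proof.
  set (a1 := fun t => fst (a t)). set (a2 := fun t => snd (a t)).
  set (b1 := fun t => fst (b t)). set (b2 := fun t => snd (b t)).
  assert (Ca1 : forall x, continuous a1 x) by (intros; apply C_cont_fst, Ha).
  assert (Ca2 : forall x, continuous a2 x) by (intros; apply C_cont_snd, Ha).
  assert (Cb1 : forall x, continuous b1 x) by (intros; apply C_cont_fst, Hb).
  assert (Cb2 : forall x, continuous b2 x) by (intros; apply C_cont_snd, Hb).
  assert (EG : forall r, @RInt C_R_CompleteNormedModule b 0 r = (RInt b1 0 r, RInt b2 0 r)).
  { intros r. apply C_RInt_eq; simpl; apply rint_real; auto. }
  set (G1 := fun r => RInt b1 0 r). set (G2 := fun r => RInt b2 0 r).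
  assert (R11 := RL a1 b1 Ca1 Cb1 x). assert (R22 := RL a2 b2 Ca2 Cb2 x).
  assert (R12 := RL a1 b2 Ca1 Cb2 x). assert (R21 := RL a2 b1 Ca2 Cb1 x).
  assert (Cm : forall (p q : R -> R), (forall x, continuous p x) -> (forall x, continuous q x) -> forall T y, continuous (fun u => p u * q (T - u)) y).
  { intros p q Hp Hq T y. apply (continuous_mult (K:=R_AbsRing)). apply Hp.
    apply (continuous_comp (fun t => T - t) q). 
    apply (ex_derive_continuous (K:=R_AbsRing) (V:=R_NormedModule)). auto_derive; exact I. apply Hq. }
  assert (CGi : forall (q : R -> R), (forall x, continuous q x) -> forall r, continuous (fun r => RInt q 0 r) r).
  { intros q Hq r. apply (continuous_RInt_1 q 0 r (fun r => RInt q 0 r)). apply filter_forall; intros; apply rint_real; auto. }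
  assert (Cpq : forall p q, (forall x, continuous p x) -> (forall x, continuous q x) -> forall T a b, is_RInt (fun u => p u * RInt q 0 (T - u)) a b (RInt (fun u => p u * RInt q 0 (T - u)) a b)).
  { intros p q Hp Hq T a0 b0. apply rint_real. intros y. apply (Cm p (fun r => RInt q 0 r)); auto. }
  assert (Cpq2 : forall p q, (forall x, continuous p x) -> (forall x, continuous q x) -> forall T a b, is_RInt (fun u => p u * q (T - u)) a b (RInt (fun u => p u * q (T - u)) a b)).
  { intros p q Hp Hq T a0 b0. apply rint_real. intros y. apply Cm; auto. }
  eapply is_derive_ext2 with (f := fun T => (RInt (fun u => a1 u * RInt b1 0 (T - u)) 0 T - RInt (fun u => a2 u * RInt b2 0 (T - u)) 0 T,
                                           RInt (fun u => a1 u * RInt b2 0 (T - u)) 0 T + RInt (fun u => a2 u * RInt b1 0 (T - u)) 0 T))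
     (l := (RInt (fun u => a1 u * b1 (x - u)) 0 x - RInt (fun u => a2 u * b2 (x - u)) 0 x,
            RInt (fun u => a1 u * b2 (x - u)) 0 x + RInt (fun u => a2 u * b1 (x - u)) 0 x)).
  - intros T. symmetry. apply C_RInt_eq.
    + eapply is_RInt_ext; [| apply (is_RInt_minus _ _ _ _ _ _ (Cpq a1 b1 Ca1 Cb1 T 0 T) (Cpq a2 b2 Ca2 Cb2 T 0 T))].
      intros u _. rewrite EG. reflexivity.
    + eapply is_RInt_ext; [| apply (is_RInt_plus _ _ _ _ _ _ (Cpq a1 b2 Ca1 Cb2 T 0 T) (Cpq a2 b1 Ca2 Cb1 T 0 T))].
      intros u _. rewrite EG. reflexivity.
  - symmetry. apply C_RInt_eq.
    + eapply is_RInt_ext; [| apply (is_RInt_minus _ _ _ _ _ _ (Cpq2 a1 b1 Ca1 Cb1 x 0 x) (Cpq2 a2 b2 Ca2 Cb2 x 0 x))].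
      intros u _. reflexivity.
    + eapply is_RInt_ext; [| apply (is_RInt_plus _ _ _ _ _ _ (Cpq2 a1 b2 Ca1 Cb2 x 0 x) (Cpq2 a2 b1 Ca2 Cb1 x 0 x))].
      intros u _. reflexivity.
  - apply C_derive_pair; simpl.
    + apply (is_derive_minus _ _ _ _ _ R11 R22).
    + apply (is_derive_plus _ _ _ _ _ R12 R21).
Qed.

Lemma cexp_add (z w : C) : cexp (Cplus z w) = Cmult (cexp z) (cexp w).
Proof.
  destruct z as [z1 z2], w as [w1 w2]. unfold cexp, Cplus, Cmult; simpl.
  rewrite exp_plus, cos_plus, sin_plus. f_equal; ring.
Qed.

Lemma Cmod_cexp (z : C) : Cmod (cexp z) = exp (fst z).
Proof.
  destruct z as [z1 z2]. unfold cexp, Cmod; simpl.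
  replace (exp z1 * cos z2 * (exp z1 * cos z2 * 1) + exp z1 * sin z2 * (exp z1 * sin z2 * 1))
    with (exp z1 * exp z1).
  apply sqrt_square. left; apply exp_pos.
  pose proof (sin2_cos2 z2). unfold Rsqr in H. 
  transitivity (exp z1 * exp z1 * (sin z2 * sin z2 + cos z2 * cos z2)). rewrite H; ring. ring.
Qed.

Definition ea (s : C) (t : R) : C := cexp (Copp (Cmult s (RtoC t))).

Lemma ea_eq (s : C) t : ea s t = (exp (- (fst s * t)) * cos (- (snd s * t)), exp (- (fst s * t)) * sin (- (snd s * t))).
Proof. destruct s; unfold ea, cexp, Copp, Cmult, RtoC; simpl. replace (r * t - r0 * 0) with (r * t) by ring. replace (r * 0 + r0 * t) with (r0 * t) by ring. reflexivity. Qed.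

Lemma ea_mult (s : C) u v : Cmult (ea s u) (ea s v) = ea s (u + v).
Proof.
  unfold ea. rewrite <- cexp_add. f_equal. destruct s; unfold Copp, Cmult, Cplus, RtoC; simpl. f_equal; ring.
Qed.

Lemma ea_0 s : ea s 0 = RtoC 1.
Proof. rewrite ea_eq. rewrite !Rmult_0_r, Ropp_0, exp_0, cos_0, sin_0. unfold RtoC. f_equal; ring. Qed.

Lemma ea_derive (s : C) t : @is_derive R_AbsRing C_R_NormedModule (ea s) t (Cmult (Copp s) (ea s t)).
Proof.
  eapply (is_derive_ext2 (fun t => (exp (- (fst s * t)) * cos (- (snd s * t)), exp (- (fst s * t)) * sin (- (snd s * t))))).
  intros; rewrite ea_eq; reflexivity. reflexivity.
  apply C_derive_pair; simpl.
  - auto_derive; [exact I|]. replace (fst s * t - snd s * 0) with (fst s * t) by ring. replace (fst s * 0 + snd s * t) with (snd s * t) by ring. ring.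
  - auto_derive; [exact I|]. replace (fst s * t - snd s * 0) with (fst s * t) by ring. replace (fst s * 0 + snd s * t) with (snd s * t) by ring. ring.
Qed.

Lemma ea_cont (s : C) t : continuous (ea s) t.
Proof.
  apply (ex_derive_continuous (K:=R_AbsRing) (V:=C_R_NormedModule)). eexists. apply ea_derive.
Qed.

Lemma C_derive_const (k : C) x : @is_derive R_AbsRing C_R_NormedModule (fun _ => k) x (RtoC 0).
Proof. apply C_derive_pair; simpl; auto_derive; auto. Qed.

Lemma C_derive_cmult (k : C) (f : R -> C) x d :
  @is_derive R_AbsRing C_R_NormedModule f x d ->
  @is_derive R_AbsRing C_R_NormedModule (fun t => Cmult k (f t)) x (Cmult k d).
Proof.
  intros H. eapply is_derive_ext2; [intro; reflexivity| |apply (C_derive_mult _ _ _ _ _ (C_derive_const k x) H)].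
  match goal with |- ?A = ?B => change (@eq C A B) end. ring.
Qed.

Lemma C_zero_deriv (f : R -> C) :
  (forall x, continuous f x) -> (forall x, 0 < x -> @is_derive R_AbsRing C_R_NormedModule f x (RtoC 0)) ->
  f 0 = RtoC 0 -> forall T, 0 <= T -> f T = RtoC 0.
Proof.
  intros Hc Hd H0 T HT.
  destruct (Req_dec T 0) as [->|HT0]; auto.
  assert (M : forall (h : R -> R), (forall x, continuous h x) -> (forall x, 0 < x -> is_derive h x 0) -> h T = h 0).
  { intros h Hh Hhd.
    destruct (MVT_gen h 0 T (fun _ => 0)) as [c0 [_ Hc0]].
    - intros x Hx. apply Hhd. rewrite Rmin_left in Hx by lra. lra.
    - intros x _. apply cont_pt_of. apply Hh.
    - lra. }
  assert (E1 := M (fun t => fst (f t)) (fun x => C_cont_fst _ _ (Hc x)) (fun x Hx => C_derive_fst _ _ _ (Hd x Hx))).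
  assert (E2 := M (fun t => snd (f t)) (fun x => C_cont_snd _ _ (Hc x)) (fun x Hx => C_derive_snd _ _ _ (Hd x Hx))).
  simpl in E1, E2. rewrite H0 in E1, E2. simpl in E1, E2.
  destruct (f T); simpl in *; subst; reflexivity.
Qed.

Notation CRInt f a b := (@RInt C_R_CompleteNormedModule f a b).

Ltac Cring := match goal with |- ?A = ?B => change (@eq C A B) end; ring.
Ltac Rring := match goal with |- ?A = ?B => change (@eq R A B) end; ring.

Lemma rint_ex (f : R -> R) a b : (forall x, continuous f x) -> ex_RInt f a b.
Proof. intros H. apply (ex_RInt_continuous (V:=R_CompleteNormedModule)). intros; apply H. Qed.

Lemma rint_chasles (f : R -> R) a b c : (forall x, continuous f x) -> RInt f a b + RInt f b c = RInt f a c.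
Proof. intros H. apply (RInt_Chasles (V:=R_CompleteNormedModule)); apply rint_ex; auto. Qed.

Lemma cmod_cont {U : UniformSpace} (f : U -> C) x : continuous f x -> continuous (fun t => Cmod (f t)) x.
Proof.
  intros H. unfold Cmod.
  apply (continuous_comp (fun t => fst (f t) ^ 2 + snd (f t) ^ 2) sqrt).
  2: apply continuous_sqrt.
  pose proof (C_cont_fst _ _ H) as H1. pose proof (C_cont_snd _ _ H) as H2.
  eapply continuous_ext; [|apply (continuous_plus (K:=R_AbsRing) (V:=R_NormedModule) (fun t => mult (fst (f t)) (fst (f t))) (fun t => mult (snd (f t)) (snd (f t))))].
  intros t; unfold plus, mult; simpl; ring.
  apply (continuous_mult (K:=R_AbsRing)); auto.
  apply (continuous_mult (K:=R_AbsRing)); auto.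
Qed.

Lemma crint_correct (f : R -> C) a b : (forall x, continuous f x) -> @is_RInt C_R_NormedModule f a b (CRInt f a b).
Proof. intros H. apply (RInt_correct (V:=C_R_CompleteNormedModule)). apply (ex_RInt_continuous (V:=C_R_CompleteNormedModule)). intros; apply H. Qed.

Lemma crint_ex (f : R -> C) a b : (forall x, continuous f x) -> @ex_RInt C_R_NormedModule f a b.
Proof. intros H. eexists. apply crint_correct; auto. Qed.

Lemma crint_chasles (f : R -> C) a b c : (forall x, continuous f x) -> Cplus (CRInt f a b) (CRInt f b c) = CRInt f a c.
Proof. intros H. apply (RInt_Chasles (V:=C_R_CompleteNormedModule)); apply crint_ex; auto. Qed.

Lemma Cmod_crint_le (f : R -> C) (g : R -> R) a b : a <= b -> (forall x, continuous f x) -> (forall x, continuous g x) ->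
  (forall x, a <= x <= b -> Cmod (f x) <= g x) -> Cmod (CRInt f a b) <= RInt g a b.
Proof.
  intros Hab Hf Hg Hb. rewrite <- C_normE.
  apply (norm_RInt_le (V:=C_R_NormedModule) f g a b); auto.
  intros x Hx; rewrite C_normE; apply Hb; lra.
  apply crint_correct; auto. apply rint_real; auto.
Qed.

Lemma Kmono (k : R -> R) u v : (forall x, continuous k x) -> (forall x, 0 <= x -> 0 <= k x) -> 0 <= u <= v ->
  RInt k 0 u <= RInt k 0 v.
Proof.
  intros Hc Hp Huv. rewrite <- (rint_chasles k 0 u v Hc).
  assert (0 <= RInt k u v). { apply RInt_ge_0. lra. apply rint_ex; auto. intros; apply Hp; lra. }
  lra.
Qed.

Lemma Kdiff (f : R -> C) u v : (forall x, continuous f x) -> u <= v ->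
  Cmod (Cminus (CRInt f 0 v) (CRInt f 0 u)) <= RInt (fun t => Cmod (f t)) 0 v - RInt (fun t => Cmod (f t)) 0 u.
Proof.
  intros Hf Huv.
  set (k := fun t : R => Cmod (f t)).
  assert (Hk : forall x, continuous k x) by (intros; apply cmod_cont; auto).
  rewrite <- (crint_chasles f 0 u v Hf), <- (rint_chasles k 0 u v Hk).
  assert (EE : Cminus (Cplus (CRInt f 0 u) (CRInt f u v)) (CRInt f 0 u) = CRInt f u v). { match goal with |- ?A = ?B => change (@eq C A B) end. ring. } rewrite EE.
  assert (EE2 : RInt k 0 u + RInt k u v - RInt k 0 u = RInt k u v) by ring. rewrite EE2.
  apply Cmod_crint_le; auto. intros; apply Rle_refl.
Qed.

Lemma lim_le (K : R -> R) M : lim_inf K M -> (forall u v, 0 <= u <= v -> K u <= K v) -> forall T, 0 <= T -> K T <= M.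
Proof.
  intros HK Hm T HT. apply Rle_plus_epsilon. intros eps Heps.
  destruct (HK eps Heps) as [M0 HM0].
  set (T' := Rmax T M0). specialize (HM0 T' (Rmax_r _ _)).
  change (norm (minus (K T') M)) with (Rabs (K T' - M)) in HM0.
  apply Rabs_def2 in HM0. assert (K T <= K T') by (apply Hm; split; [lra| apply Rmax_l]). lra.
Qed.

Lemma Cmod_lim_le (F : R -> C) (l z : C) (b : R) : lim_inf F l -> (exists T0, forall T, T0 <= T -> Cmod (Cminus (F T) z) <= b) ->
  Cmod (Cminus l z) <= b.
Proof.
  intros HF [T0 HT0]. apply Rle_plus_epsilon. intros eps Heps.
  destruct (HF eps Heps) as [M0 HM0].
  set (T := Rmax T0 M0). specialize (HM0 T (Rmax_r _ _)). specialize (HT0 T (Rmax_l _ _)).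
  rewrite C_normE in HM0. change (minus (F T) l) with (Cminus (F T) l) in HM0.
  replace (Cminus l z) with (Cplus (Copp (Cminus (F T) l)) (Cminus (F T) z)) by Cring.
  eapply Rle_trans. apply Cmod_triangle. rewrite Cmod_opp. lra.
Qed.

Lemma TAIL (f : R -> C) l M : (forall x, continuous f x) ->
  lim_inf (fun T => CRInt f 0 T) l -> lim_inf (fun T => RInt (fun t => Cmod (f t)) 0 T) M ->
  forall r, 0 <= r -> Cmod (Cminus l (CRInt f 0 r)) <= M - RInt (fun t => Cmod (f t)) 0 r.
Proof.
  intros Hf Hl HM r Hr.
  assert (Hk : forall x, continuous (fun t => Cmod (f t)) x) by (intros; apply cmod_cont; auto).
  assert (Hmono : forall u v, 0 <= u <= v -> RInt (fun t => Cmod (f t)) 0 u <= RInt (fun t => Cmod (f t)) 0 v).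
  { intros; apply Kmono; auto. intros; apply Cmod_ge_0. }
  apply (Cmod_lim_le (fun T => CRInt f 0 T)); auto.
  exists r. intros T HT.
  eapply Rle_trans. apply Kdiff; auto.
  assert (RInt (fun t => Cmod (f t)) 0 T <= M) by (apply (lim_le _ M HM Hmono); lra).
  lra.
Qed.

Lemma lim_ge0 (K : R -> R) M : lim_inf K M -> (forall T, 0 <= T -> 0 <= K T) -> 0 <= M.
Proof.
  intros HK Hp. apply Rle_plus_epsilon. intros eps Heps.
  destruct (HK eps Heps) as [M0 HM0]. set (T := Rmax 0 M0).
  specialize (HM0 T (Rmax_r _ _)). change (norm (minus (K T) M)) with (Rabs (K T - M)) in HM0.
  apply Rabs_def2 in HM0. assert (0 <= K T) by (apply Hp, Rmax_l). lra.
Qed.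

Lemma rint_scal_r (k : R -> R) (d : R) a b : (forall x, continuous k x) ->
  RInt (fun u => k u * d) a b = RInt k a b * d.
Proof.
  intros Hk. transitivity (RInt (fun u => scal d (k u)) a b).
  apply RInt_ext. intros. unfold scal; simpl; unfold mult; simpl. ring.
  etransitivity. apply (RInt_scal (V:=R_CompleteNormedModule) k a b d (rint_ex k a b Hk)).
  unfold scal; simpl; unfold mult; simpl. ring.
Qed.

Lemma crint_minus (f g : R -> C) a b : (forall x, continuous f x) -> (forall x, continuous g x) ->
  CRInt (fun u => Cminus (f u) (g u)) a b = Cminus (CRInt f a b) (CRInt g a b).
Proof.
  intros Hf Hg. apply is_RInt_unique.
  apply (is_RInt_minus (V:=C_R_NormedModule)); apply crint_correct; auto.
Qed.

Lemma crint_cmult (k : C) (f : R -> C) a b : (forall x, continuous f x) ->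
  CRInt (fun u => Cmult k (f u)) a b = Cmult k (CRInt f a b).
Proof.
  intros Hf. apply is_RInt_unique. apply C_RInt_mult_l. apply crint_correct; auto.
Qed.

Lemma cont_shift (f : R -> C) T x : (forall x, continuous f x) -> continuous (fun u => f (T - u)) x.
Proof.
  intros Hf. apply (continuous_comp (fun u => T - u) f).
  apply (ex_derive_continuous (K:=R_AbsRing) (V:=R_NormedModule)). auto_derive; exact I. apply Hf.
Qed.

Lemma crint_cont (f : R -> C) a x : (forall x, continuous f x) -> continuous (fun T => CRInt f a T) x.
Proof.
  intros Hf. apply (continuous_RInt_1 (V:=C_R_NormedModule) f a x (fun T => CRInt f a T)).
  apply filter_forall. intros; apply crint_correct; auto.
Qed.

Lemma rint_cont (f : R -> R) a x : (forall x, continuous f x) -> continuous (fun T => RInt f a T) x.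
Proof.
  intros Hf. apply (continuous_RInt_1 (V:=R_NormedModule) f a x (fun T => RInt f a T)).
  apply filter_forall. intros; apply rint_real; auto.
Qed.

Lemma conv_lim (a b : R -> C) la lb Ma Mb :
  (forall x, continuous a x) -> (forall x, continuous b x) ->
  lim_inf (fun T => CRInt a 0 T) la -> lim_inf (fun T => CRInt b 0 T) lb ->
  lim_inf (fun T => RInt (fun t => Cmod (a t)) 0 T) Ma ->
  lim_inf (fun T => RInt (fun t => Cmod (b t)) 0 T) Mb ->
  forall eps, 0 < eps -> exists T1, forall T, T1 <= T ->
    Cmod (Cminus (CRInt (fun u => Cmult (a u) (CRInt b 0 (T - u))) 0 T) (Cmult lb (CRInt a 0 T))) <= eps.
Proof.
  intros Ha Hb Hla Hlb HMa HMb eps Heps.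
  set (ka := fun t : R => Cmod (a t)). set (kb := fun t : R => Cmod (b t)).
  assert (Cka : forall x, continuous ka x) by (intros; apply cmod_cont; auto).
  assert (Ckb : forall x, continuous kb x) by (intros; apply cmod_cont; auto).
  set (Na := fun T => RInt ka 0 T). set (Nb := fun T => RInt kb 0 T).
  assert (Na0 : forall T, 0 <= T -> 0 <= Na T).
  { intros. apply RInt_ge_0; auto. apply rint_ex; auto. intros; apply Cmod_ge_0. }
  assert (Nb0 : forall T, 0 <= T -> 0 <= Nb T).
  { intros. apply RInt_ge_0; auto. apply rint_ex; auto. intros; apply Cmod_ge_0. }
  assert (Nam : forall u v, 0 <= u <= v -> Na u <= Na v).
  { intros; apply Kmono; auto. intros; apply Cmod_ge_0. }
  assert (Nbm : forall u v, 0 <= u <= v -> Nb u <= Nb v).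
  { intros; apply Kmono; auto. intros; apply Cmod_ge_0. }
  assert (Ma0 : 0 <= Ma) by (apply (lim_ge0 Na); auto).
  assert (Mb0 : 0 <= Mb) by (apply (lim_ge0 Nb); auto).
  assert (NaM : forall T, 0 <= T -> Na T <= Ma) by (apply lim_le; auto).
  assert (NbM : forall T, 0 <= T -> Nb T <= Mb) by (apply lim_le; auto).
  assert (Tl := TAIL b lb Mb Hb Hlb HMb).
  set (d1 := eps / (2 * (Ma + 1))). set (d2 := eps / (2 * (Mb + 1))).
  assert (Hd1 : 0 < d1) by (unfold d1; apply Rdiv_lt_0_compat; lra).
  assert (Hd2 : 0 < d2) by (unfold d2; apply Rdiv_lt_0_compat; lra).
  destruct (HMb d1 Hd1) as [M1 HM1]. destruct (HMa d2 Hd2) as [M2 HM2].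
  assert (HM1' : forall T, M1 <= T -> Nb T - Mb < d1 /\ - d1 < Nb T - Mb).
  { intros T' H'. apply Rabs_def2. exact (HM1 T' H'). }
  assert (HM2' : forall T, M2 <= T -> Na T - Ma < d2 /\ - d2 < Na T - Ma).
  { intros T' H'. apply Rabs_def2. exact (HM2 T' H'). }
  clear HM1 HM2.
  set (T0 := Rmax 0 (Rmax M1 M2)).
  assert (T00 : 0 <= T0) by apply Rmax_l.
  assert (T01 : M1 <= T0) by (eapply Rle_trans; [apply Rmax_l | apply Rmax_r]).
  assert (T02 : M2 <= T0) by (eapply Rle_trans; [apply Rmax_r | apply Rmax_r]).
  exists (2 * T0). intros T HT.
  set (D := fun u => Cmult (a u) (Cminus (CRInt b 0 (T - u)) lb)).
  assert (CG : forall x, continuous (fun u => CRInt b 0 (T - u)) x).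
  { intros x. apply (continuous_comp (fun u => T - u) (fun r => CRInt b 0 r)).
    apply (ex_derive_continuous (K:=R_AbsRing) (V:=R_NormedModule)). auto_derive; exact I.
    apply crint_cont; auto. }
  assert (CD : forall x, continuous D x).
  { intros x. unfold D. apply C_cont_mult; auto.
    eapply continuous_ext; [|apply (continuous_minus (V:=C_R_NormedModule) _ (fun _ => lb) x (CG x) (continuous_const _ _))].
    reflexivity. }
  assert (E1 : Cminus (CRInt (fun u => Cmult (a u) (CRInt b 0 (T - u))) 0 T) (Cmult lb (CRInt a 0 T)) = CRInt D 0 T).
  { rewrite <- crint_cmult by auto. rewrite <- crint_minus.
    - apply (RInt_ext (V:=C_R_CompleteNormedModule)). intros; unfold D. Cring.
    - intros; apply C_cont_mult; auto.
    - intros; apply C_cont_mult; auto. apply continuous_const. }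
  rewrite E1. rewrite <- (crint_chasles D 0 (T - T0) T CD).
  eapply Rle_trans. apply Cmod_triangle.
  assert (B1 : Cmod (CRInt D 0 (T - T0)) <= Na (T - T0) * d1).
  { unfold Na. rewrite <- rint_scal_r by auto.
    apply Cmod_crint_le; auto. lra.
    intros; apply (continuous_mult (K:=R_AbsRing)); auto. apply continuous_const.
    intros u Hu. unfold D. rewrite Cmod_mult. apply Rmult_le_compat_l. apply Cmod_ge_0.
    rewrite <- Cmod_opp. replace (Copp (Cminus (CRInt b 0 (T - u)) lb)) with (Cminus lb (CRInt b 0 (T - u))) by Cring.
    eapply Rle_trans. apply Tl. lra.
    specialize (HM1' (T - u) ltac:(lra)). unfold Nb, kb in HM1'. lra. }
  assert (B2 : Cmod (CRInt D (T - T0) T) <= (Na T - Na (T - T0)) * Mb).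
  { assert (EN : Na T - Na (T - T0) = RInt ka (T - T0) T).
    { unfold Na. rewrite <- (rint_chasles ka 0 (T - T0) T Cka). ring. }
    rewrite EN, <- rint_scal_r by auto.
    apply Cmod_crint_le; auto. lra.
    intros; apply (continuous_mult (K:=R_AbsRing)); auto. apply continuous_const.
    intros u Hu. unfold D. rewrite Cmod_mult. apply Rmult_le_compat_l. apply Cmod_ge_0.
    rewrite <- Cmod_opp. replace (Copp (Cminus (CRInt b 0 (T - u)) lb)) with (Cminus lb (CRInt b 0 (T - u))) by Cring.
    eapply Rle_trans. apply Tl. lra. assert (0 <= Nb (T - u)) by (apply Nb0; lra). unfold Nb, kb in H. lra. }
  assert (N1 : Na (T - T0) * d1 <= Ma * d1) by (apply Rmult_le_compat_r; [lra| apply NaM; lra]).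
  assert (N2 : Na T - Na (T - T0) <= d2).
  { assert (Na T0 <= Na (T - T0)) by (apply Nam; lra).
    specialize (HM2' T0 T02). assert (Na T <= Ma) by (apply NaM; lra). lra. }
  assert (N3 : (Na T - Na (T - T0)) * Mb <= d2 * Mb) by (apply Rmult_le_compat_r; lra).
  assert (F1 : Ma * d1 <= eps / 2).
  { unfold d1. apply (Rmult_le_reg_r (2 * (Ma + 1))). lra. field_simplify; try lra. }
  assert (F2 : d2 * Mb <= eps / 2).
  { unfold d2. apply (Rmult_le_reg_r (2 * (Mb + 1))). lra. field_simplify; try lra. }
  lra.
Qed.

Lemma li_cont (f : R -> C) s : (forall x, continuous f x) -> forall x, continuous (laplace_integrand f s) x.
Proof.
  intros Hf x. unfold laplace_integrand. apply C_cont_mult; auto.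
  apply (ea_cont s x).
Qed.

Lemma abs_conv_lims (f : R -> C) s : (forall x, continuous f x) -> laplace_abs_conv f s ->
  exists M, lim_inf (fun T => RInt (fun t => Cmod (laplace_integrand f s t)) 0 T) M /\
            lim_inf (fun T => CRInt (laplace_integrand f s) 0 T) (laplace f s).
Proof.
  intros Hf H.
  assert (Ca := li_cont f s Hf).
  assert (Ck : forall x, continuous (fun t => Cmod (laplace_integrand f s t)) x) by (intros; apply cmod_cont; auto).
  unfold laplace_abs_conv in H.
  pose proof (RInt_gen_correct (V:=R_CompleteNormedModule) _ H) as H1.
  apply lim_inf_RInt_gen in H1.
  eexists. split. exact H1.
  destruct (lim_inf_dom (V:=C_R_CompleteNormedModule) (laplace_integrand f s) (fun t => Cmod (laplace_integrand f s t)) _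
     (fun T _ => crint_ex _ 0 T Ca) (fun T _ => rint_ex _ 0 T Ck)
     (fun t _ => Req_le _ _ (C_normE _)) H1) as [l Hl].
  replace (laplace f s) with l. exact Hl.
  symmetry. unfold laplace. apply lim_inf_unique_RInt_gen; auto.
  intros; apply crint_ex; auto.
Qed.

Lemma C_derive_plus (f g : R -> C) x df dg :
  @is_derive R_AbsRing C_R_NormedModule f x df -> @is_derive R_AbsRing C_R_NormedModule g x dg ->
  @is_derive R_AbsRing C_R_NormedModule (fun t => Cplus (f t) (g t)) x (Cplus df dg).
Proof. intros H1 H2. eapply is_derive_ext2; [intro; reflexivity | reflexivity | apply (is_derive_plus _ _ _ _ _ H1 H2)]. Qed.

Lemma C_derive_minus (f g : R -> C) x df dg :
  @is_derive R_AbsRing C_R_NormedModule f x df -> @is_derive R_AbsRing C_R_NormedModule g x dg ->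
  @is_derive R_AbsRing C_R_NormedModule (fun t => Cminus (f t) (g t)) x (Cminus df dg).
Proof. intros H1 H2. eapply is_derive_ext2; [intro; reflexivity | reflexivity | apply (is_derive_minus _ _ _ _ _ H1 H2)]. Qed.

Lemma C_cont_plus {U : UniformSpace} (f g : U -> C) x : continuous f x -> continuous g x -> continuous (fun t => Cplus (f t) (g t)) x.
Proof. intros H1 H2. eapply continuous_ext; [|apply (continuous_plus (V:=C_R_NormedModule) _ _ _ H1 H2)]. reflexivity. Qed.

Lemma C_cont_minus {U : UniformSpace} (f g : U -> C) x : continuous f x -> continuous g x -> continuous (fun t => Cminus (f t) (g t)) x.
Proof. intros H1 H2. eapply continuous_ext; [|apply (continuous_minus (V:=C_R_NormedModule) _ _ _ H1 H2)]. reflexivity. Qed.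

Lemma lim_inf_C (F : R -> C) l : lim_inf F l -> forall eps, 0 < eps -> exists M, forall T, M <= T -> Cmod (Cminus (F T) l) < eps.
Proof. intros H eps Heps. destruct (H eps Heps) as [M HM]. exists M. intros T HT. rewrite <- C_normE. exact (HM T HT). Qed.

Lemma CORE (y g : R -> C) (c : R) (s : C)
  (Hy : forall x, continuous y x) (Hg : forall x, continuous g x)
  (Hd : forall t, 0 < t -> @is_derive R_AbsRing C_R_NormedModule y t
          (Cmult (RtoC (- c)) (CRInt (fun u => Cmult (g (t - u)) (y u)) 0 t)))
  (Hay : laplace_abs_conv y s) (Hag : laplace_abs_conv g s) :
  Cplus (Cmult s (laplace y s)) (Cmult (RtoC c) (Cmult (laplace g s) (laplace y s))) = y 0.
Proof.
  set (a := laplace_integrand y s). set (b := laplace_integrand g s).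
  assert (Ca : forall x, continuous a x) by (apply li_cont; auto).
  assert (Cb : forall x, continuous b x) by (apply li_cont; auto).
  destruct (abs_conv_lims y s Hy Hay) as [Ma [HMa Hla]].
  destruct (abs_conv_lims g s Hg Hag) as [Mb [HMb Hlb]].
  set (ly := laplace y s) in *. set (lg := laplace g s) in *.
  set (Y := fun T => CRInt a 0 T).
  set (A := fun T => CRInt (fun u => Cmult (a u) (CRInt b 0 (T - u))) 0 T).
  set (Phi := fun T => Cplus (Cminus (a T) (y 0)) (Cplus (Cmult s (Y T)) (Cmult (RtoC c) (A T)))).
  assert (HA : forall T, @is_derive R_AbsRing C_R_NormedModule A T (CRInt (fun u => Cmult (a u) (b (T - u))) 0 T)).
  { intros T. exact (CL a b Ca Cb T). }
  assert (EAB : forall T, CRInt (fun u => Cmult (a u) (b (T - u))) 0 T = Cmult (ea s T) (CRInt (fun u => Cmult (g (T - u)) (y u)) 0 T)).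
  { intros T. rewrite <- crint_cmult.
    2:{ intros; apply C_cont_mult; auto. apply cont_shift; auto. }
    apply (RInt_ext (V:=C_R_CompleteNormedModule)). intros u _.
    transitivity (Cmult (Cmult (ea s u) (ea s (T - u))) (Cmult (g (T - u)) (y u))).
    unfold a, b, laplace_integrand, ea. Cring.
    rewrite ea_mult. replace (u + (T - u)) with T by ring. reflexivity. }
  assert (HY : forall T, @is_derive R_AbsRing C_R_NormedModule Y T (a T)).
  { intros T. apply (is_derive_RInt (V:=C_R_NormedModule) a Y 0 T).
    apply filter_forall; intros; apply crint_correct; auto. apply Ca. }
  assert (HPd : forall T, 0 < T -> @is_derive R_AbsRing C_R_NormedModule Phi T (RtoC 0)).
  { intros T HT.
    assert (Ha : @is_derive R_AbsRing C_R_NormedModule a T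
                  (Cplus (Cmult (Cmult (Copp s) (ea s T)) (y T)) (Cmult (ea s T) (Cmult (RtoC (- c)) (CRInt (fun u => Cmult (g (T - u)) (y u)) 0 T))))).
    { apply (C_derive_mult (ea s) y). apply ea_derive. apply Hd; auto. }
    eapply is_derive_ext2; [intro; reflexivity | |
      apply (C_derive_plus _ _ _ _ _ (C_derive_minus _ _ _ _ _ Ha (C_derive_const (y 0) T))
               (C_derive_plus _ _ _ _ _ (C_derive_cmult s _ _ _ (HY T)) (C_derive_cmult (RtoC c) _ _ _ (HA T))))].
    rewrite EAB. unfold a, laplace_integrand. fold (ea s T). rewrite RtoC_opp. Cring. }
  assert (HPc : forall x, continuous Phi x).
  { intros x. unfold Phi. apply C_cont_plus. apply C_cont_minus. apply Ca. apply continuous_const.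
    apply C_cont_plus. apply C_cont_mult. apply continuous_const. apply crint_cont; auto.
    apply C_cont_mult. apply continuous_const.
    apply (ex_derive_continuous (K:=R_AbsRing) (V:=C_R_NormedModule)). eexists; apply HA. }
  assert (HP0 : Phi 0 = RtoC 0).
  { assert (Y0 : Y 0 = RtoC 0) by (unfold Y; exact (RInt_point (V:=C_R_CompleteNormedModule) 0 a)).
    assert (A0 : A 0 = RtoC 0) by (unfold A; exact (RInt_point (V:=C_R_CompleteNormedModule) 0 _)).
    assert (a0 : a 0 = y 0).
    { unfold a, laplace_integrand. change (cexp (Copp (Cmult s (RtoC 0)))) with (ea s 0). rewrite ea_0. Cring. }
    unfold Phi. rewrite Y0, A0, a0. Cring. }
  assert (HP := C_zero_deriv Phi HPc HPd HP0).
  set (L := Cminus (Cminus (y 0) (Cmult s ly)) (Cmult (RtoC c) (Cmult lg ly))).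
  assert (HL : L = RtoC 0).
  { destruct (Req_dec (Cmod L) 0) as [H0|H0]. apply Cmod_eq_0; auto.
    exfalso. assert (HLp : 0 < Cmod L) by (pose proof (Cmod_ge_0 L); lra).
    set (e := Cmod L / 2). assert (He : 0 < e) by (unfold e; lra).
    set (K := Cmod s + Rabs c * Cmod lg + Rabs c + 1).
    assert (HK : 1 <= K) by (unfold K; pose proof (Cmod_ge_0 s); pose proof (Cmod_ge_0 lg); pose proof (Rabs_pos c); nra).
    assert (HeK : 0 < e / K) by (apply Rdiv_lt_0_compat; lra).
    destruct (lim_inf_C _ _ Hla (e / K) HeK) as [M1 HM1].
    destruct (conv_lim a b ly lg Ma Mb Ca Cb Hla Hlb HMa HMb (e / K) HeK) as [T1 HT1].
    set (T2 := Rmax 0 (Rmax M1 T1)).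
    assert (T20 : 0 <= T2) by apply Rmax_l.
    assert (T21 : M1 <= T2) by (eapply Rle_trans; [apply Rmax_l | apply Rmax_r]).
    assert (T22 : T1 <= T2) by (eapply Rle_trans; [apply Rmax_r | apply Rmax_r]).
    assert (Hbig : forall T, T2 <= T -> e <= Cmod (a T)).
    { intros T HT.
      assert (EaT : a T = Cminus (Cminus (y 0) (Cmult s (Y T))) (Cmult (RtoC c) (A T))).
      { assert (P := HP T ltac:(lra)). unfold Phi in P.
        transitivity (Cplus (Cminus (Cminus (y 0) (Cmult s (Y T))) (Cmult (RtoC c) (A T)))
                            (Cplus (Cminus (a T) (y 0)) (Cplus (Cmult s (Y T)) (Cmult (RtoC c) (A T))))).
        Cring. rewrite P. Cring. }
      assert (D : Cminus (a T) L = Cplus (Cplus (Cmult (Copp s) (Cminus (Y T) ly))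
                    (Cmult (Copp (RtoC c)) (Cminus (A T) (Cmult lg (Y T)))))
                    (Cmult (Copp (Cmult (RtoC c) lg)) (Cminus (Y T) ly))).
      { rewrite EaT. unfold L. Cring. }
      assert (B1 : Cmod (Cminus (Y T) ly) < e / K) by (unfold Y; apply HM1; lra).
      assert (B2 : Cmod (Cminus (A T) (Cmult lg (Y T))) <= e / K) by (unfold A, Y; apply HT1; lra).
      assert (Bd : Cmod (Cminus (a T) L) <= (Cmod s + Rabs c * Cmod lg) * (e / K) + Rabs c * (e / K)).
      { rewrite D. eapply Rle_trans. apply Cmod_triangle. eapply Rle_trans. apply Rplus_le_compat_r. apply Cmod_triangle.
        rewrite !Cmod_mult, !Cmod_opp, Cmod_mult, Cmod_R.
        pose proof (Cmod_ge_0 s). pose proof (Cmod_ge_0 lg). pose proof (Rabs_pos c).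
        pose proof (Cmod_ge_0 (Cminus (Y T) ly)). pose proof (Cmod_ge_0 (Cminus (A T) (Cmult lg (Y T)))).
        assert (Cmod s * Cmod (Cminus (Y T) ly) <= Cmod s * (e / K)) by (apply Rmult_le_compat_l; lra).
        assert (Rabs c * Cmod lg * Cmod (Cminus (Y T) ly) <= Rabs c * Cmod lg * (e / K)) by (apply Rmult_le_compat_l; [apply Rmult_le_pos|]; lra).
        assert (Rabs c * Cmod (Cminus (A T) (Cmult lg (Y T))) <= Rabs c * (e / K)) by (apply Rmult_le_compat_l; lra).
        lra. }
      assert (Bd2 : (Cmod s + Rabs c * Cmod lg) * (e / K) + Rabs c * (e / K) < e).
      { replace ((Cmod s + Rabs c * Cmod lg) * (e / K) + Rabs c * (e / K)) with ((K - 1) * (e / K)) by (unfold K; ring).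
        replace e with (K * (e / K)) at 2 by (field; lra). apply Rmult_lt_compat_r; lra. }
      assert (Tr : Cmod L <= Cmod (a T) + Cmod (Cminus (a T) L)).
      { replace L with (Cplus (a T) (Copp (Cminus (a T) L))) at 1 by Cring.
        eapply Rle_trans. apply Cmod_triangle. rewrite Cmod_opp. lra. }
      unfold e in *. lra. }
    set (k := fun t => Cmod (a t)).
    assert (Ck : forall x, continuous k x) by (intros; apply cmod_cont; auto).
    assert (Nle : forall T, 0 <= T -> RInt k 0 T <= Ma).
    { apply lim_le. exact HMa. intros; apply Kmono; auto. intros; apply Cmod_ge_0. }
    set (T := T2 + (Ma + 1) / e).
    assert (HMa0 : 0 <= Ma) by (apply (lim_ge0 (fun T => RInt k 0 T)); auto; intros; apply RInt_ge_0; auto; [apply rint_ex; auto | intros; apply Cmod_ge_0]).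
    assert (HT : T2 <= T) by (unfold T; assert (0 <= (Ma + 1) / e) by (apply Rdiv_le_0_compat; lra); lra).
    assert (I1 : 0 <= RInt k 0 T2) by (apply RInt_ge_0; auto; [apply rint_ex; auto | intros; apply Cmod_ge_0]).
    assert (I2 : RInt (fun _ => e) T2 T <= RInt k T2 T).
    { apply RInt_le; auto. apply (ex_RInt_const (V:=R_CompleteNormedModule)). apply rint_ex; auto.
      intros x Hx. apply Hbig. lra. }
    assert (I3 : RInt (fun _ => e) T2 T = (T - T2) * e).
    { rewrite (RInt_const (V:=R_CompleteNormedModule)). reflexivity. }
    assert (I4 : RInt k 0 T2 + RInt k T2 T = RInt k 0 T) by (apply rint_chasles; auto).
    assert (I5 : (T - T2) * e = Ma + 1) by (unfold T; field; lra).
    assert (RInt k 0 T <= Ma) by (apply Nle; lra).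
    lra. }
  unfold L in HL.
  transitivity (Cplus (Cplus (Cmult s ly) (Cmult (RtoC c) (Cmult lg ly)))
      (Cminus (Cminus (y 0) (Cmult s ly)) (Cmult (RtoC c) (Cmult lg ly)))).
  rewrite HL. Cring. Cring.
Qed.

Lemma csum_ext n (f g : nat -> C) : (forall k, (k < n)%nat -> f k = g k) -> csum n f = csum n g.
Proof. induction n; simpl; intros H; auto. rewrite IHn, H; auto; intros; apply H; lia. Qed.

Lemma csum_plus n (f g : nat -> C) : csum n (fun k => Cplus (f k) (g k)) = Cplus (csum n f) (csum n g).
Proof. induction n; simpl. Cring. rewrite IHn. Cring. Qed.

Lemma csum_mult_l n (c : C) (f : nat -> C) : csum n (fun k => Cmult c (f k)) = Cmult c (csum n f).
Proof. induction n; simpl. Cring. rewrite IHn. Cring. Qed.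

Lemma csum_mult_r n (c : C) (f : nat -> C) : csum n (fun k => Cmult (f k) c) = Cmult (csum n f) c.
Proof. induction n; simpl. Cring. rewrite IHn. Cring. Qed.

Lemma csum_zero n : csum n (fun _ => RtoC 0) = RtoC 0.
Proof. induction n; simpl; auto. rewrite IHn. Cring. Qed.

Lemma csum_swap n m (f : nat -> nat -> C) :
  csum n (fun k => csum m (fun l => f k l)) = csum m (fun l => csum n (fun k => f k l)).
Proof.
  induction n; simpl. rewrite csum_zero. reflexivity.
  rewrite IHn. rewrite <- csum_plus. reflexivity.
Qed.

Lemma csum_delta n i (x : nat -> C) : (i < n)%nat ->
  csum n (fun k => if Nat.eqb i k then x k else RtoC 0) = x i.
Proof.
  induction n; simpl; intros H. lia.
  destruct (Nat.eqb i n) eqn:E.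
  - apply Nat.eqb_eq in E; subst.
    rewrite (csum_ext _ _ (fun _ => RtoC 0)). rewrite csum_zero. Cring.
    intros k Hk. destruct (Nat.eqb n k) eqn:E2; auto. apply Nat.eqb_eq in E2; lia.
  - apply Nat.eqb_neq in E. rewrite IHn by lia. Cring.
Qed.

Lemma csum_delta' n i (x : nat -> C) : (i < n)%nat ->
  csum n (fun k => if Nat.eqb k i then x k else RtoC 0) = x i.
Proof.
  intros H. rewrite <- (csum_delta n i x H). apply csum_ext. intros k _.
  rewrite Nat.eqb_sym. reflexivity.
Qed.

Lemma mfun_entry N U (d : nat -> C) i m :
  mmul N (mmul N U (mdiag d)) (madj U) i m = csum N (fun n => Cmult (Cmult (U i n) (d n)) (Cconj (U m n))).
Proof.
  unfold mmul, madj. apply csum_ext. intros n Hn. f_equal. unfold mdiag.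
  transitivity (csum N (fun l => if Nat.eqb l n then Cmult (U i l) (d l) else RtoC 0)).
  - apply csum_ext; intros l _. destruct (Nat.eqb l n); Cring.
  - apply (csum_delta' N n (fun l => Cmult (U i l) (d l)) Hn).
Qed.

Lemma ALG N U (d : nat -> C) (W : Mat) a j : (a < N)%nat -> meq N (mmul N (madj U) U) mid ->
  csum N (fun k => Cmult (Cconj (U k a)) (mmul N (mmul N (mmul N U (mdiag d)) (madj U)) W k j)) =
  Cmult (d a) (csum N (fun k => Cmult (Cconj (U k a)) (W k j))).
Proof.
  intros Ha HU.
  set (Yn := fun n => csum N (fun m => Cmult (Cconj (U m n)) (W m j))).
  transitivity (csum N (fun k => csum N (fun n => Cmult (Cmult (Cmult (Cconj (U k a)) (U k n)) (d n)) (Yn n)))).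
  { apply csum_ext. intros k Hk. unfold mmul at 1.
    transitivity (csum N (fun m => csum N (fun n => Cmult (Cmult (Cmult (Cconj (U k a)) (U k n)) (d n)) (Cmult (Cconj (U m n)) (W m j))))).
    - rewrite <- csum_mult_l. apply csum_ext. intros m Hm. rewrite mfun_entry.
      rewrite <- csum_mult_r, <- csum_mult_l. apply csum_ext. intros n Hn. Cring.
    - rewrite csum_swap. apply csum_ext. intros n Hn. unfold Yn. rewrite <- csum_mult_l. reflexivity. }
  rewrite csum_swap.
  transitivity (csum N (fun n => if Nat.eqb a n then Cmult (d n) (Yn n) else RtoC 0)).
  - apply csum_ext. intros n Hn.
    transitivity (Cmult (csum N (fun k => Cmult (Cconj (U k a)) (U k n))) (Cmult (d n) (Yn n))).
    { rewrite <- csum_mult_r. apply csum_ext. intros; Cring. }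
    assert (E : csum N (fun k => Cmult (Cconj (U k a)) (U k n)) = mid a n).
    { rewrite <- (HU a n Ha Hn). unfold mmul, madj. reflexivity. }
    rewrite E. unfold mid. destruct (Nat.eqb a n); Cring.
  - rewrite csum_delta by auto. reflexivity.
Qed.

Lemma ALG2 N U (W : Mat) i j : (i < N)%nat -> meq N (mmul N U (madj U)) mid ->
  csum N (fun a => Cmult (U i a) (csum N (fun k => Cmult (Cconj (U k a)) (W k j)))) = W i j.
Proof.
  intros Hi HU.
  transitivity (csum N (fun k => Cmult (csum N (fun a => Cmult (U i a) (Cconj (U k a)))) (W k j))).
  - transitivity (csum N (fun a => csum N (fun k => Cmult (Cmult (U i a) (Cconj (U k a))) (W k j)))).
    + apply csum_ext. intros a0 _. rewrite <- csum_mult_l. apply csum_ext. intros; Cring.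
    + rewrite csum_swap. apply csum_ext. intros k _. rewrite <- csum_mult_r. reflexivity.
  - transitivity (csum N (fun k => if Nat.eqb i k then W k j else RtoC 0)).
    + apply csum_ext. intros k Hk.
      assert (E : csum N (fun a => Cmult (U i a) (Cconj (U k a))) = mid i k).
      { rewrite <- (HU i k Hi Hk). unfold mmul, madj. reflexivity. }
      rewrite E. unfold mid. destruct (Nat.eqb i k); Cring.
    + apply (csum_delta N i (fun k => W k j)); auto.
Qed.

Fixpoint rsum (n : nat) (f : nat -> R) : R :=
  match n with O => 0 | S n' => rsum n' f + f n' end.

Lemma csum_cont (n : nat) (f : nat -> R -> C) x : (forall k, (k < n)%nat -> continuous (f k) x) ->
  continuous (fun t => csum n (fun k => f k t)) x.
Proof.
  induction n; simpl; intros H. apply continuous_const.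
  apply C_cont_plus. apply IHn; intros; apply H; lia. apply H; lia.
Qed.

Lemma csum_derive (n : nat) (f : nat -> R -> C) (d : nat -> C) x :
  (forall k, (k < n)%nat -> @is_derive R_AbsRing C_R_NormedModule (f k) x (d k)) ->
  @is_derive R_AbsRing C_R_NormedModule (fun t => csum n (fun k => f k t)) x (csum n d).
Proof.
  induction n; simpl; intros H. apply C_derive_const.
  apply C_derive_plus. apply IHn; intros; apply H; lia. apply H; lia.
Qed.

Lemma csum_RInt (n : nat) (f : nat -> R -> C) (l : nat -> C) a b :
  (forall k, (k < n)%nat -> @is_RInt C_R_NormedModule (f k) a b (l k)) ->
  @is_RInt C_R_NormedModule (fun t => csum n (fun k => f k t)) a b (csum n l).
Proof.
  induction n; simpl; intros H.
  - eapply is_RInt_ext2; [intro; reflexivity| |apply (is_RInt_const (V:=C_R_NormedModule) a b (RtoC 0))].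
    change (Cmult (RtoC (b - a)) (RtoC 0) = RtoC 0) || (rewrite C_scalE). Cring.
  - apply (is_RInt_plus (V:=C_R_NormedModule)). apply IHn; intros; apply H; lia. apply H; lia.
Qed.

Lemma C_lim_inf_of (F : R -> C) l : (forall eps, 0 < eps -> exists M, forall T, M <= T -> Cmod (Cminus (F T) l) < eps) -> lim_inf F l.
Proof. intros H eps Heps. destruct (H eps Heps) as [M HM]. exists M. intros T HT. rewrite C_normE. exact (HM T HT). Qed.

Lemma C_lim_plus (F G : R -> C) l1 l2 : lim_inf F l1 -> lim_inf G l2 -> lim_inf (fun T => Cplus (F T) (G T)) (Cplus l1 l2).
Proof.
  intros H1 H2. apply C_lim_inf_of. intros eps Heps.
  destruct (lim_inf_C _ _ H1 (eps/2) ltac:(lra)) as [M1 HM1].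
  destruct (lim_inf_C _ _ H2 (eps/2) ltac:(lra)) as [M2 HM2].
  exists (Rmax M1 M2). intros T HT.
  replace (Cminus (Cplus (F T) (G T)) (Cplus l1 l2)) with (Cplus (Cminus (F T) l1) (Cminus (G T) l2)) by Cring.
  eapply Rle_lt_trans. apply Cmod_triangle.
  assert (A1 := HM1 T ltac:(pose proof (Rmax_l M1 M2); lra)). assert (A2 := HM2 T ltac:(pose proof (Rmax_r M1 M2); lra)). lra.
Qed.

Lemma C_lim_cmult (k : C) (F : R -> C) l : lim_inf F l -> lim_inf (fun T => Cmult k (F T)) (Cmult k l).
Proof.
  intros H. apply C_lim_inf_of. intros eps Heps.
  destruct (lim_inf_C _ _ H (eps / (Cmod k + 1))) as [M HM].
  { apply Rdiv_lt_0_compat; auto. pose proof (Cmod_ge_0 k); lra. }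
  exists M. intros T HT.
  replace (Cminus (Cmult k (F T)) (Cmult k l)) with (Cmult k (Cminus (F T) l)) by Cring.
  rewrite Cmod_mult. specialize (HM T HT).
  pose proof (Cmod_ge_0 k). pose proof (Cmod_ge_0 (Cminus (F T) l)).
  apply Rle_lt_trans with ((Cmod k + 1) * Cmod (Cminus (F T) l)). nra.
  replace eps with ((Cmod k + 1) * (eps / (Cmod k + 1))) by (field; lra).
  apply Rmult_lt_compat_l; lra.
Qed.

Lemma C_lim_const (l : C) : lim_inf (fun _ => l) l.
Proof.
  apply C_lim_inf_of. intros eps Heps. exists 0. intros. replace (Cminus l l) with (RtoC 0) by Cring.
  rewrite Cmod_0. lra.
Qed.

Lemma csum_lim (n : nat) (F : nat -> R -> C) (l : nat -> C) :
  (forall k, (k < n)%nat -> lim_inf (F k) (l k)) -> lim_inf (fun T => csum n (fun k => F k T)) (csum n l).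
Proof.
  induction n; simpl; intros H. apply C_lim_const.
  apply C_lim_plus. apply IHn; intros; apply H; lia. apply H; lia.
Qed.

Lemma R_lim_inf_of (F : R -> R) l : (forall eps, 0 < eps -> exists M, forall T, M <= T -> Rabs (F T - l) < eps) -> lim_inf F l.
Proof. intros H eps Heps. destruct (H eps Heps) as [M HM]. exists M. intros T HT. exact (HM T HT). Qed.

Lemma R_lim_inf_to (F : R -> R) l : lim_inf F l -> forall eps, 0 < eps -> exists M, forall T, M <= T -> Rabs (F T - l) < eps.
Proof. intros H eps Heps. destruct (H eps Heps) as [M HM]. exists M. intros T HT. exact (HM T HT). Qed.

Lemma rsum_lim (n : nat) (F : nat -> R -> R) (l : nat -> R) :
  (forall k, (k < n)%nat -> lim_inf (F k) (l k)) -> lim_inf (fun T => rsum n (fun k => F k T)) (rsum n l).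
Proof.
  induction n; simpl; intros H.
  - apply R_lim_inf_of. intros eps Heps. exists 0. intros. rewrite Rminus_0_r, Rabs_R0. lra.
  - apply R_lim_inf_of. intros eps Heps.
    destruct (R_lim_inf_to _ _ (IHn (fun k Hk => H k ltac:(lia))) (eps/2) ltac:(lra)) as [M1 HM1].
    destruct (R_lim_inf_to _ _ (H n ltac:(lia)) (eps/2) ltac:(lra)) as [M2 HM2].
    exists (Rmax M1 M2). intros T HT.
    assert (A1 := HM1 T ltac:(pose proof (Rmax_l M1 M2); lra)). assert (A2 := HM2 T ltac:(pose proof (Rmax_r M1 M2); lra)).
    replace (rsum n (fun k => F k T) + F n T - (rsum n l + l n)) with ((rsum n (fun k => F k T) - rsum n l) + (F n T - l n)) by ring.
    eapply Rle_lt_trans. apply Rabs_triang. lra.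
Qed.

Lemma R_lim_scal (k : R) (F : R -> R) l : lim_inf F l -> lim_inf (fun T => k * F T) (k * l).
Proof.
  intros H. apply R_lim_inf_of. intros eps Heps.
  destruct (R_lim_inf_to _ _ H (eps / (Rabs k + 1))) as [M HM].
  { apply Rdiv_lt_0_compat; auto. pose proof (Rabs_pos k); lra. }
  exists M. intros T HT. specialize (HM T HT).
  replace (k * F T - k * l) with (k * (F T - l)) by ring. rewrite Rabs_mult.
  pose proof (Rabs_pos k). pose proof (Rabs_pos (F T - l)).
  apply Rle_lt_trans with ((Rabs k + 1) * Rabs (F T - l)). nra.
  replace eps with ((Rabs k + 1) * (eps / (Rabs k + 1))) by (field; lra).
  apply Rmult_lt_compat_l; lra.
Qed.

Lemma rsum_RInt (n : nat) (f : nat -> R -> R) a b :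
  (forall k, (k < n)%nat -> forall x, continuous (f k) x) ->
  RInt (fun t => rsum n (fun k => f k t)) a b = rsum n (fun k => RInt (f k) a b).
Proof.
  intros H. apply is_RInt_unique.
  induction n; simpl.
  - eapply is_RInt_ext2; [intro; reflexivity| |apply (is_RInt_const (V:=R_NormedModule) a b 0)].
    unfold scal; simpl; unfold mult; simpl; ring.
  - apply (is_RInt_plus (V:=R_NormedModule)). apply IHn; intros; apply H; lia. apply rint_real; apply H; lia.
Qed.

Lemma rsum_cont (n : nat) (f : nat -> R -> R) x : (forall k, (k < n)%nat -> continuous (f k) x) ->
  continuous (fun t => rsum n (fun k => f k t)) x.
Proof.
  induction n; simpl; intros H. apply continuous_const.
  apply (continuous_plus (V:=R_NormedModule)). apply IHn; intros; apply H; lia. apply H; lia.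
Qed.

Lemma Cmod_csum_le (n : nat) (f : nat -> C) : Cmod (csum n f) <= rsum n (fun k => Cmod (f k)).
Proof.
  induction n; simpl. rewrite Cmod_0; lra.
  eapply Rle_trans. apply Cmod_triangle. lra.
Qed.

Lemma rsum_ge0 (n : nat) (f : nat -> R) : (forall k, (k < n)%nat -> 0 <= f k) -> 0 <= rsum n f.
Proof. induction n; simpl; intros H. lra. pose proof (H n ltac:(lia)). pose proof (IHn (fun k Hk => H k ltac:(lia))). lra. Qed.

Lemma Rmax_lip x t : Rabs (Rmax 0 t - Rmax 0 x) <= Rabs (t - x).
Proof. unfold Rmax. destruct (Rle_dec 0 t), (Rle_dec 0 x); unfold Rabs; repeat destruct Rcase_abs; lra. Qed.

Lemma cont_clamp (f : R -> C) : continuous_on_nonneg f -> forall x, continuous (fun t => f (Rmax 0 t)) x.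
Proof.
  intros Hf x. unfold continuous.
  specialize (Hf (Rmax 0 x) (Rmax_l _ _)).
  intros P HP. specialize (Hf P HP). unfold within in Hf.
  destruct Hf as [eps He].
  exists eps. intros t Ht. apply He.
  - change (Rabs (Rmax 0 t - Rmax 0 x) < eps). eapply Rle_lt_trans. apply Rmax_lip. exact Ht.
  - apply Rmax_l.
Qed.

Lemma cexpi_cont (e : R) x : continuous (fun t => cexp (0, e * t)) x.
Proof.
  apply C_cont_pair; simpl; apply (ex_derive_continuous (K:=R_AbsRing) (V:=R_NormedModule)); auto_derive; auto.
Qed.

Lemma scale_gen {V : CompleteNormedModule R_AbsRing} (h : R -> V) (c : R) (l : V) : 0 < c ->
  (forall x, continuous h x) ->
  is_RInt_gen (fun t => h (t / c)) (at_point 0) (Rbar_locally p_infty) l ->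
  is_RInt_gen h (at_point 0) (Rbar_locally p_infty) (scal (/ c) l).
Proof.
  intros Hc Hh H.
  assert (Hex : forall a b, ex_RInt h a b) by (intros; apply ex_RInt_continuous; intros; apply Hh).
  assert (Key : forall T, RInt h 0 T = scal (/ c) (RInt (fun t => h (t / c)) 0 (c * T))).
  { intros T. apply is_RInt_unique.
    assert (K1 := RInt_correct _ _ _ (Hex 0 T)).
    assert (K2 : is_RInt (fun y => scal c (h ((c * y + 0) / c))) 0 T (RInt (fun t => h (t / c)) 0 (c * T))).
    { apply (is_RInt_comp_lin (fun t => h (t / c)) c 0 0 T).
      replace (c * 0 + 0) with 0 by ring. replace (c * T + 0) with (c * T) by ring.
      apply RInt_correct. apply ex_RInt_continuous. intros z _.
      apply (continuous_comp (fun t => t / c) h). apply (ex_derive_continuous (K:=R_AbsRing) (V:=R_NormedModule)).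
      auto_derive; auto. apply Hh. }
    apply is_RInt_scal with (k := / c) in K2.
    eapply is_RInt_ext; [|exact K2]. intros y _. simpl.
    rewrite scal_assoc. replace ((c * y + 0) / c) with y by (field; lra).
    replace (mult (/ c) c) with (@one R_Ring). apply scal_one.
    unfold mult, one; simpl. field; lra. }
  apply RInt_gen_lim_inf.
  - intros; apply Hex.
  - apply lim_inf_RInt_gen in H.
    intros eps Heps. destruct (H (c * eps)) as [M HM]. nra.
    exists (M / c). intros T HT. rewrite Key.
    set (X := RInt (fun t => h (t / c)) 0 (c * T)).
    apply Rle_lt_trans with (norm (scal (/ c) (minus X l))).
    { right. f_equal. symmetry. apply (scal_minus_distr_l (K:=R_Ring) (V:=V)). }
    eapply Rle_lt_trans. exact (norm_scal (K:=R_AbsRing) (V:=V) (/ c) (minus X l)).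
    specialize (HM (c * T)). 
    assert (M <= c * T). { apply (Rmult_le_compat_l c) in HT; [|lra]. replace (c * (M / c)) with M in HT by (field; lra). lra. }
    specialize (HM H0).
    change (abs (/ c)) with (Rabs (/ c)). rewrite Rabs_right by (apply Rle_ge; left; apply Rinv_0_lt_compat; lra).
    apply (Rmult_lt_reg_l c). lra. rewrite <- Rmult_assoc, Rinv_r, Rmult_1_l by lra. exact HM.
Qed.

Lemma pos_ext {V : NormedModule R_AbsRing} (f g : R -> V) : (forall x, 0 < x -> f x = g x) ->
  filter_prod (at_point 0) (Rbar_locally p_infty)
    (fun ab => forall x, Rmin (fst ab) (snd ab) < x /\ x < Rmax (fst ab) (snd ab) -> f x = g x).
Proof.
  intros H. apply Filter_prod with (Q := fun x => x = 0) (R := fun y => 0 < y).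
  reflexivity. exists 0. auto.
  intros x y -> Hy z Hz. simpl in Hz. rewrite Rmin_left in Hz by lra. apply H. lra.
Qed.

Lemma li_scale (f : R -> C) c p t : 0 < c -> 0 <= t ->
  laplace_integrand (fun t => f (t / c)) p t = laplace_integrand (fun t => f (Rmax 0 t)) (Cmult (RtoC c) p) (t / c).
Proof.
  intros Hc Ht. unfold laplace_integrand. rewrite Rmax_right.
  2:{ apply Rdiv_le_0_compat; lra. }
  f_equal. f_equal. f_equal. destruct p. unfold Cmult, RtoC; simpl. f_equal; field; lra.
Qed.

Lemma scaleV (f : R -> C) c p : 0 < c -> continuous_on_nonneg f -> laplace_abs_conv (fun t => f (t / c)) p ->
  laplace_abs_conv (fun t => f (Rmax 0 t)) (Cmult (RtoC c) p) /\
  laplace (fun t => f (t / c)) p = Cmult (RtoC c) (laplace (fun t => f (Rmax 0 t)) (Cmult (RtoC c) p)).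
Proof.
  intros Hc Hf H.
  set (fc := fun t => f (Rmax 0 t)).
  assert (Cfc : forall x, continuous fc x) by (apply cont_clamp; auto).
  set (h := laplace_integrand fc (Cmult (RtoC c) p)).
  assert (Ch : forall x, continuous h x) by (apply li_cont; auto).
  assert (Chs : forall x, continuous (fun t => h (t / c)) x).
  { intros x. apply (continuous_comp (fun t => t / c) h). apply (ex_derive_continuous (K:=R_AbsRing) (V:=R_NormedModule)).
    auto_derive; auto. apply Ch. }
  assert (Habs : ex_RInt_gen (fun t => Cmod (h (t / c))) (at_point 0) (Rbar_locally p_infty)).
  { eapply ex_RInt_gen_ext; [|exact H]. apply pos_ext. intros x Hx. unfold h. rewrite li_scale; auto. lra. }
  split.
  - destruct Habs as [l Hl]. exists (scal (/ c) l).
    apply (scale_gen (V:=R_CompleteNormedModule) (fun t => Cmod (h t))); auto.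
    intros; apply cmod_cont; auto.
  - assert (Ck : forall x, continuous (fun t => Cmod (h (t / c))) x) by (intros; apply cmod_cont; auto).
    pose proof (RInt_gen_correct (V:=R_CompleteNormedModule) _ Habs) as H1.
    apply lim_inf_RInt_gen in H1.
    destruct (lim_inf_dom (V:=C_R_CompleteNormedModule) (fun t => h (t / c)) (fun t => Cmod (h (t / c))) _
       (fun T _ => crint_ex _ 0 T Chs) (fun T _ => rint_ex _ 0 T Ck)
       (fun t _ => Req_le _ _ (C_normE _)) H1) as [l Hl].
    assert (G1 := RInt_gen_lim_inf (V:=C_R_CompleteNormedModule) (fun t => h (t / c)) l (fun T _ => crint_ex _ 0 T Chs) Hl).
    assert (G2 := scale_gen (V:=C_R_CompleteNormedModule) h c l Hc Ch G1).
    assert (E2 : laplace fc (Cmult (RtoC c) p) = scal (/ c) l).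
    { unfold laplace. exact (is_RInt_gen_unique _ _ G2). }
    assert (E1 : laplace (fun t => f (t / c)) p = l).
    { unfold laplace. apply (is_RInt_gen_unique (V:=C_R_CompleteNormedModule)). eapply is_RInt_gen_ext; [|exact G1].
      apply pos_ext. intros x Hx. unfold h. rewrite li_scale; auto. lra. }
    rewrite E1. fold fc. rewrite E2. rewrite C_scalE.
    transitivity (Cmult (Cmult (RtoC c) (RtoC (/ c))) l). 2: Cring.
    rewrite <- RtoC_mult, Rinv_r by lra. symmetry; apply Cmult_1_l.
Qed.

Definition gfun (G : R -> C) (e : R) (t : R) : C := Cmult (G (Rmax 0 t)) (cexp (0, e * t)).

Lemma gfun_cont G e : continuous_on_nonneg G -> forall x, continuous (gfun G e) x.
Proof. intros HG x. unfold gfun. apply C_cont_mult. apply (cont_clamp G HG). apply cexpi_cont. Qed.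

Lemma li_gfun G e s t : 0 <= t ->
  laplace_integrand (gfun G e) s t = laplace_integrand G (Cplus (Copp (Cmult Ci (RtoC e))) s) t.
Proof.
  intros Ht. unfold laplace_integrand, gfun. rewrite Rmax_right by lra.
  transitivity (Cmult (Cmult (cexp (Copp (Cmult s (RtoC t)))) (cexp (0, e * t))) (G t)). Cring.
  rewrite <- cexp_add. f_equal. f_equal. destruct s. unfold Cplus, Copp, Cmult, Ci, RtoC; simpl. f_equal; ring.
Qed.

Lemma g_lap (G : R -> C) (e : R) s : continuous_on_nonneg G ->
  laplace_abs_conv G (Cplus (Copp (Cmult Ci (RtoC e))) s) ->
  laplace_abs_conv (gfun G e) s /\ laplace (gfun G e) s = laplace G (Cplus (Copp (Cmult Ci (RtoC e))) s).
Proof.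
  intros HG H.
  assert (Hc := gfun_cont G e HG).
  assert (Ha : laplace_abs_conv (gfun G e) s).
  { unfold laplace_abs_conv. eapply ex_RInt_gen_ext; [|exact H]. apply pos_ext. intros x Hx. rewrite li_gfun; auto. lra. }
  split; auto.
  destruct (abs_conv_lims _ s Hc Ha) as [M [_ Hl]].
  assert (G1 := RInt_gen_lim_inf (V:=C_R_CompleteNormedModule) _ _ (fun T _ => crint_ex _ 0 T (li_cont _ s Hc)) Hl).
  symmetry. unfold laplace at 1. apply (is_RInt_gen_unique (V:=C_R_CompleteNormedModule)).
  eapply is_RInt_gen_ext; [|exact G1]. apply pos_ext. intros x Hx. rewrite li_gfun; auto. lra.
Qed.

Definition yfun N (U : Mat) (V : R -> Mat) a j (t : R) : C :=
  csum N (fun k => Cmult (Cconj (U k a)) (V (Rmax 0 t) k j)).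

Lemma y_cont N U V a j : (forall k, (k < N)%nat -> continuous_on_nonneg (fun t => V t k j)) ->
  forall x, continuous (yfun N U V a j) x.
Proof.
  intros H x. unfold yfun. apply csum_cont. intros k Hk. apply C_cont_mult. apply continuous_const.
  apply (cont_clamp (fun t => V t k j)). auto.
Qed.

Lemma y_0 N U V a j : (j < N)%nat -> meq N (V 0) mid -> yfun N U V a j 0 = Cconj (U j a).
Proof.
  intros Hj HV. unfold yfun. rewrite Rmax_left by lra.
  transitivity (csum N (fun k => if Nat.eqb k j then Cconj (U k a) else RtoC 0)).
  - apply csum_ext. intros k Hk. rewrite HV by auto. unfold mid.
    destruct (Nat.eqb k j); Cring.
  - apply (csum_delta' N j (fun k => Cconj (U k a))). auto.
Qed.

Lemma V_decomp N U V i j t : (i < N)%nat -> meq N (mmul N U (madj U)) mid ->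
  V (Rmax 0 t) i j = csum N (fun a => Cmult (U i a) (yfun N U V a j t)).
Proof. intros Hi HU. unfold yfun. symmetry. apply (ALG2 N U (V (Rmax 0 t)) i j Hi HU). Qed.

Lemma rint_scal_l (k : R -> R) (d : R) a b : (forall x, continuous k x) ->
  RInt (fun u => d * k u) a b = d * RInt k a b.
Proof.
  intros Hk. rewrite Rmult_comm, <- rint_scal_r by auto. apply RInt_ext. intros; Rring.
Qed.

Lemma rsum_ext n (f g : nat -> R) : (forall k, (k < n)%nat -> f k = g k) -> rsum n f = rsum n g.
Proof. induction n; simpl; intros H; auto. rewrite IHn, H; auto; intros; apply H; lia. Qed.

Lemma lim_inf_ext_fun {V : NormedModule R_AbsRing} (F G : R -> V) l : (forall T, F T = G T) -> lim_inf F l -> lim_inf G l.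
Proof. intros H1 H2 eps Heps. destruct (H2 eps Heps) as [M HM]. exists M. intros T HT. rewrite <- H1. auto. Qed.

Lemma y_abs N U V a j s : (forall k, (k < N)%nat -> continuous_on_nonneg (fun t => V t k j)) ->
  (forall k, (k < N)%nat -> laplace_abs_conv (fun t => V (Rmax 0 t) k j) s) ->
  laplace_abs_conv (yfun N U V a j) s.
Proof.
  intros Hc Ha.
  set (lk := fun k t => laplace_integrand (fun t => V (Rmax 0 t) k j) s t).
  assert (Clk : forall k, (k < N)%nat -> forall x, continuous (fun t => Cmod (lk k t)) x).
  { intros k Hk x. apply cmod_cont. apply li_cont. apply (cont_clamp (fun t => V t k j)); auto. }
  set (Mk := fun k => RInt_gen (fun t => Cmod (lk k t)) (at_point 0) (Rbar_locally p_infty)).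
  assert (HMk : forall k, (k < N)%nat -> lim_inf (fun T => RInt (fun t => Cmod (lk k t)) 0 T) (Mk k)).
  { intros k Hk. apply lim_inf_RInt_gen. apply (RInt_gen_correct (V:=R_CompleteNormedModule)). apply Ha; auto. }
  set (kf := fun t => rsum N (fun k => Cmod (U k a) * Cmod (lk k t))).
  assert (Ckf : forall x, continuous kf x).
  { intros x. unfold kf. apply rsum_cont. intros k Hk. apply (continuous_mult (K:=R_AbsRing)). apply continuous_const. apply Clk; auto. }
  assert (Hkf : lim_inf (fun T => RInt kf 0 T) (rsum N (fun k => Cmod (U k a) * Mk k))).
  { apply (lim_inf_ext_fun (fun T => rsum N (fun k => Cmod (U k a) * RInt (fun t => Cmod (lk k t)) 0 T))).
    - intros T. unfold kf. rewrite rsum_RInt.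
      + apply rsum_ext. intros k Hk. symmetry.
        apply (rint_scal_l (fun t => Cmod (lk k t))). apply Clk; auto.
      + intros k Hk x. apply (continuous_mult (K:=R_AbsRing)). apply continuous_const. apply Clk; auto.
    - apply rsum_lim. intros k Hk. apply R_lim_scal. apply HMk; auto. }
  assert (Hb : forall t, 0 <= t -> norm (Cmod (laplace_integrand (yfun N U V a j) s t)) <= kf t).
  { intros t _. change (norm (Cmod (laplace_integrand (yfun N U V a j) s t))) with (Rabs (Cmod (laplace_integrand (yfun N U V a j) s t))).
    rewrite Rabs_right by (apply Rle_ge, Cmod_ge_0).
    unfold laplace_integrand, yfun. rewrite <- csum_mult_l.
    eapply Rle_trans. apply Cmod_csum_le. unfold kf.
    right. f_equal. apply functional_extensionality. intros k.
    transitivity (Cmod (Cmult (Cconj (U k a)) (lk k t))).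
    + f_equal. unfold lk, laplace_integrand. Cring.
    + rewrite Cmod_mult, Cmod_conj. reflexivity. }
  assert (Cy : forall x, continuous (fun t => Cmod (laplace_integrand (yfun N U V a j) s t)) x).
  { intros x. apply cmod_cont. apply li_cont. apply y_cont; auto. }
  destruct (lim_inf_dom (V:=R_CompleteNormedModule) _ kf _ (fun T _ => rint_ex _ 0 T Cy) (fun T _ => rint_ex _ 0 T Ckf) Hb Hkf) as [l Hl].
  exists l. exact (RInt_gen_lim_inf (V:=R_CompleteNormedModule) _ l (fun T _ => rint_ex _ 0 T Cy) Hl).
Qed.

Lemma y_deriv N (G : R -> C) U E (lam : R) V a j t :
  (a < N)%nat -> (j < N)%nat -> meq N (mmul N (madj U) U) mid ->
  (forall t, 0 < t -> forall i j, (i < N)%nat -> (j < N)%nat ->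
     exists D : C,
       @is_RInt C_R_NormedModule
         (fun s => Cmult (G (t - s)) (mmul N (expiH N U E (t - s)) (V s) i j)) 0 t D /\
       @is_derive R_AbsRing C_R_NormedModule (fun tau => V tau i j) t
         (Cmult (RtoC (- lam ^ 2)) D)) ->
  0 < t ->
  @is_derive R_AbsRing C_R_NormedModule (yfun N U V a j) t
    (Cmult (RtoC (- lam ^ 2)) (CRInt (fun u => Cmult (gfun G (E a) (t - u)) (yfun N U V a j u)) 0 t)).
Proof.
  intros Ha Hj HU Hd Ht.
  set (Ik := fun k u => Cmult (G (t - u)) (mmul N (expiH N U E (t - u)) (V u) k j)).
  assert (HIk : forall k, (k < N)%nat -> @is_RInt C_R_NormedModule (Ik k) 0 t (CRInt (Ik k) 0 t) /\
             @is_derive R_AbsRing C_R_NormedModule (fun tau => V tau k j) t (Cmult (RtoC (- lam ^ 2)) (CRInt (Ik k) 0 t))).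
  { intros k Hk. destruct (Hd t Ht k j Hk Hj) as [D [H1 H2]].
    assert (ED : CRInt (Ik k) 0 t = D) by (apply is_RInt_unique; exact H1).
    rewrite ED. split; auto. }
  assert (Hsum := csum_derive N (fun k tau => Cmult (Cconj (U k a)) (V tau k j))
                    (fun k => Cmult (Cconj (U k a)) (Cmult (RtoC (- lam ^ 2)) (CRInt (Ik k) 0 t))) t
                    (fun k Hk => C_derive_cmult _ _ _ _ (proj2 (HIk k Hk)))).
  apply (is_derive_ext_loc _ (yfun N U V a j)) in Hsum.
  2:{ exists (mkposreal t Ht). intros tau Htau. unfold yfun. rewrite Rmax_right. reflexivity.
      change (Rabs (tau - t) < t) in Htau. apply Rabs_def2 in Htau. lra. }
  eapply is_derive_ext2; [intro; reflexivity | | exact Hsum].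
  transitivity (Cmult (RtoC (- lam ^ 2)) (csum N (fun k => Cmult (Cconj (U k a)) (CRInt (Ik k) 0 t)))).
  { rewrite <- csum_mult_l. apply csum_ext. intros; Cring. }
  f_equal. symmetry. apply (is_RInt_unique (V:=C_R_CompleteNormedModule)).
  eapply is_RInt_ext; [| apply (csum_RInt N (fun k u => Cmult (Cconj (U k a)) (Ik k u)) (fun k => Cmult (Cconj (U k a)) (CRInt (Ik k) 0 t)) 0 t
                              (fun k Hk => C_RInt_mult_l _ _ _ _ _ (proj1 (HIk k Hk))))].
  intros x Hx. rewrite Rmin_left in Hx by lra. rewrite Rmax_right in Hx by lra.
  transitivity (Cmult (G (t - x)) (csum N (fun k => Cmult (Cconj (U k a)) (mmul N (expiH N U E (t - x)) (V x) k j)))).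
  { rewrite <- csum_mult_l. apply csum_ext. intros; unfold Ik; Cring. }
  unfold expiH, mfun. cbv beta.
  rewrite (ALG N U (fun n => cexp (0, E n * (t - x))) (V x) a j Ha HU).
  unfold gfun, yfun. rewrite (Rmax_right 0 (t - x)) by lra. rewrite (Rmax_right 0 x) by lra. Cring.
Qed.

Theorem lemma2 (N : nat) (G : R -> C) (H0 H2 U : Mat) (E : nat -> R)
    (lam : R) (V : R -> Mat) (p : C) :
  continuous_on_nonneg G ->
  hermitian N H0 -> hermitian N H2 ->
  0 < lam ->
  unitary N U ->
  meq N (madd H0 (mscal (RtoC (lam ^ 2)) H2)) (mmul N (mmul N U (mdiag (fun a => RtoC (E a)))) (madj U)) ->
  is_solution N G U E lam V ->
  (forall i j, (i < N)%nat -> (j < N)%nat ->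
     laplace_abs_conv (fun t => V (t / lam ^ 2) i j) p) ->
  (forall a, (a < N)%nat ->
     laplace_abs_conv G (Cplus (Copp (Cmult Ci (RtoC (E a)))) (Cmult (RtoC (lam ^ 2)) p))) ->
  meq N (fun i j => laplace (fun t => V (t / lam ^ 2) i j) p)
        (mfun N U E (fun e =>
           Cinv (Cplus p (laplace G (Cplus (Copp (Cmult Ci (RtoC e))) (Cmult (RtoC (lam ^ 2)) p)))))).
Proof.
  intros HG _ _ Hlam HU _ Hsol HVc HGc.
  destruct Hsol as [HV0 [HVcont HVd]].
  destruct HU as [HUU HUtU].
  assert (Hc : 0 < lam ^ 2) by (apply pow_lt; lra).
  set (c := lam ^ 2) in *.
  set (s := Cmult (RtoC c) p) in *.
  assert (SV : forall k l, (k < N)%nat -> (l < N)%nat ->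
            laplace_abs_conv (fun t => V (Rmax 0 t) k l) s /\
            laplace (fun t => V (t / c) k l) p = Cmult (RtoC c) (laplace (fun t => V (Rmax 0 t) k l) s)).
  { intros k l Hk Hl. apply (scaleV (fun t => V t k l) c p Hc (HVcont k l Hk Hl) (HVc k l Hk Hl)). }
  set (Gt := fun a => laplace G (Cplus (Copp (Cmult Ci (RtoC (E a)))) s)).
  set (ly := fun a l => laplace (yfun N U V a l) s).
  assert (Key : forall a l, (a < N)%nat -> (l < N)%nat ->
            Cmult (RtoC c) (Cmult (Cplus p (Gt a)) (ly a l)) = Cconj (U l a)).
  { intros a l Ha Hl.
    assert (Y := CORE (yfun N U V a l) (gfun G (E a)) c s
                   (y_cont N U V a l (fun k Hk => HVcont k l Hk Hl))
                   (gfun_cont G (E a) HG)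
                   (fun t Ht => y_deriv N G U E lam V a l t Ha Hl HUtU HVd Ht)
                   (y_abs N U V a l s (fun k Hk => HVcont k l Hk Hl) (fun k Hk => proj1 (SV k l Hk Hl)))
                   (proj1 (g_lap G (E a) s HG (HGc a Ha)))).
    rewrite (proj2 (g_lap G (E a) s HG (HGc a Ha))) in Y.
    rewrite (y_0 N U V a l Hl HV0) in Y.
    rewrite <- Y. unfold ly, Gt, s. Cring. }
  assert (NZ : forall a, (a < N)%nat -> Cplus p (Gt a) <> RtoC 0).
  { intros a Ha Hz.
    assert (Z : forall l, (l < N)%nat -> Cconj (U l a) = RtoC 0).
    { intros l Hl. rewrite <- (Key a l Ha Hl), Hz. Cring. }
    assert (E1 := HUtU a a Ha Ha). unfold mmul, madj, mid in E1. rewrite Nat.eqb_refl in E1.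
    rewrite (csum_ext _ _ (fun _ => RtoC 0)) in E1.
    - rewrite csum_zero in E1. injection E1. lra.
    - intros k Hk. rewrite Z; auto. Cring. }
  intros i j Hi Hj. cbv beta.
  rewrite (proj2 (SV i j Hi Hj)).
  assert (LV : laplace (fun t => V (Rmax 0 t) i j) s = csum N (fun a => Cmult (U i a) (ly a j))).
  { assert (Cy : forall a, (a < N)%nat -> forall x, continuous (laplace_integrand (yfun N U V a j) s) x).
    { intros a Ha x. apply li_cont. apply y_cont. intros; apply HVcont; auto. }
    assert (CV : forall x, continuous (laplace_integrand (fun t => V (Rmax 0 t) i j) s) x).
    { intros x. apply li_cont. apply (cont_clamp (fun t => V t i j)). auto. }
    unfold laplace at 1. apply (lim_inf_unique_RInt_gen (V:=C_R_CompleteNormedModule)).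
    { intros; apply crint_ex; auto. }
    apply (lim_inf_ext_fun (fun T => csum N (fun a => Cmult (U i a) (CRInt (laplace_integrand (yfun N U V a j) s) 0 T)))).
    - intros T. symmetry. apply (is_RInt_unique (V:=C_R_CompleteNormedModule)).
      eapply is_RInt_ext; [| apply (csum_RInt N (fun a u => Cmult (U i a) (laplace_integrand (yfun N U V a j) s u))
                                 (fun a => Cmult (U i a) (CRInt (laplace_integrand (yfun N U V a j) s) 0 T)) 0 T
                                 (fun a Ha => C_RInt_mult_l _ _ _ _ _ (crint_correct _ _ _ (Cy a Ha))))].
      intros x _. unfold laplace_integrand at 2. rewrite (V_decomp N U V i j x Hi HUU).
      rewrite <- csum_mult_l. apply csum_ext. intros a _. unfold laplace_integrand. Cring.
    - apply csum_lim. intros a Ha. apply C_lim_cmult.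
      destruct (abs_conv_lims (yfun N U V a j) s (y_cont N U V a j (fun k Hk => HVcont k j Hk Hj))
                 (y_abs N U V a j s (fun k Hk => HVcont k j Hk Hj) (fun k Hk => proj1 (SV k j Hk Hj)))) as [M [_ Hl]].
      exact Hl. }
  rewrite LV. unfold mfun. rewrite mfun_entry.
  rewrite <- csum_mult_l. apply csum_ext. intros a Ha.
  rewrite <- (Key a j Ha Hj). fold (Gt a). 
  field. apply NZ; auto.
Qed.
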